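(* Let $M>2$, $p_M=\frac{M+2}{M-2}$, $m\ge1$, and for $p\in(1,p_M)$ let $v_p$ be the unique solution in $H^1_{0,M}$ of $-(t^{M-1}v')'=t^{M-1}|v|^{p-1}v$ on $(0,1)$, $v'(0)=0$, $v(1)=0$, with exactly $m$ nodal zones and $v_p(0)>0$. For all $i=0,\dots,m-1$, \[ \liminf_{p\to p_M}\int_{t_{i,p}}^{t_{i+1,p}}t^{M-1}|v_p|^{p+1}dt=\liminf_{p\to p_M}\int_{t_{i,p}}^{t_{i+1,p}}t^{M-1}|v_p'|^{2}dt\ge S_M^{M/2}, \] and in particular $\liminf_{p\to p_M}\mathcal M_{i,p}>0$.
   Context: $H^1_{0,M}$: measurable $v$ on $(0,1)$ with $\int_0^1t^{M-1}(v^2+|v'|^2)<\infty$ and $v(1)=0$. $0=t_{0,p}<t_{1,p}<\dots<t_{m,p}=1$ are $0$ and the zeros of $v_p$; $\mathcal M_{i,p}=\max_{[t_{i,p},t_{i+1,p}]}|v_p|$. $S_M=\inf\{\int_0^1t^{M-1}|v'|^2dt/(\int_0^1t^{M-1}|v|^{2M/(M-2)}dt)^{(M-2)/M}: v\in H^1_{0,M}\setminus\{0\}\}$ is the best constant of the Sobolev embedding of $H^1_{0,M}$ into the weighted space $L^{2M/(M-2)}$ with weight $t^{M-1}$. *)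

(* Defs.v *)
From Stdlib Require Import Reals.
From Coquelicot Require Import Coquelicot.
Open Scope R_scope.

(* real power with the convention x^y = 0 for x <= 0 (used with y > 0) *)
Definition rpow (x y : R) : R := if Rle_dec x 0 then 0 else Rpower x y.

Definition wgt (M t : R) : R := rpow t (M - 1).

Definition wint (M : R) (f : R -> R) : R :=
  RInt_gen (fun t => wgt M t * f t) (at_right 0) (at_point 1).
Definition wint_ex (M : R) (f : R -> R) : Prop :=
  ex_RInt_gen (fun t => wgt M t * f t) (at_right 0) (at_point 1).

(* (regular representatives of) H^1_{0,M}: C^1 functions on (0,1] with
   v(1)=0 and int_0^1 t^(M-1) (v^2 + |v'|^2) < oo *)
Definition H10M (M : R) (v : R -> R) : Prop :=
  v 1 = 0 /\
  (forall t, 0 < t <= 1 -> ex_derive v t /\ continuous (Derive v) t) /\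
  wint_ex M (fun t => v t ^ 2) /\ wint_ex M (fun t => Derive v t ^ 2).

Definition S_M (M : R) : R :=
  real (Rbar_glb (fun y : Rbar => exists v : R -> R,
     H10M M v /\ (exists t, 0 < t < 1 /\ v t <> 0) /\
     wint_ex M (fun t => rpow (Rabs (v t)) (2 * M / (M - 2))) /\
     y = Finite (wint M (fun t => Derive v t ^ 2) /
          rpow (wint M (fun t => rpow (Rabs (v t)) (2 * M / (M - 2))))
               ((M - 2) / M)))).

Definition radial_sol (M p : R) (v : R -> R) : Prop :=
  H10M M v /\
  filterlim v (at_right 0) (locally (v 0)) /\
  filterlim (Derive v) (at_right 0) (locally 0) /\
  (forall t, 0 < t < 1 ->
     is_derive (fun s => wgt M s * Derive v s) t
               (- (wgt M t * (rpow (Rabs (v t)) (p - 1) * v t)))).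

(* t 0 = 0 < t 1 < ... < t m = 1, and t 1..t m are exactly the zeros of v in [0,1]
   (so v has exactly m nodal zones) *)
Definition nodal_points (m : nat) (v : R -> R) (t : nat -> R) : Prop :=
  t 0%nat = 0 /\ t m = 1 /\
  (forall i, (i < m)%nat -> t i < t (S i)) /\
  (forall i, (1 <= i <= m)%nat -> v (t i) = 0) /\
  (forall s, 0 <= s <= 1 -> v s = 0 -> exists i, (1 <= i <= m)%nat /\ s = t i).

Definition liminf_left (f : R -> R) (a : R) : Rbar :=
  Rbar_lub (fun y => exists d, 0 < d /\
     y = Rbar_glb (fun z => exists p, a - d < p < a /\ z = Finite (f p))).

Definition maxabs (v : R -> R) (a b : R) : R :=
  real (Lub_Rbar (fun y => exists s, a <= s <= b /\ y = Rabs (v s))).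

(* Main.v *)
Require Import Defs.
From Stdlib Require Import Reals Lra Lia.
From Coquelicot Require Import Coquelicot.
Open Scope R_scope.


Lemma rpow_pos x y : 0 < x -> rpow x y = Rpower x y.
Proof. intros H. unfold rpow. destruct (Rle_dec x 0); [lra|auto]. Qed.
Lemma rpow_le0 x y : x <= 0 -> rpow x y = 0.
Proof. intros H. unfold rpow. destruct (Rle_dec x 0); [auto|lra]. Qed.
Lemma rpow_ge0 x y : 0 <= rpow x y.
Proof. unfold rpow. destruct (Rle_dec x 0); [lra|]. unfold Rpower. left; apply exp_pos. Qed.
Lemma Rpower_pos x y : 0 < Rpower x y.
Proof. unfold Rpower; apply exp_pos. Qed.

Lemma rpow_small r eps : 0 < r -> 0 < eps ->
  exists d, 0 < d /\ forall x, Rabs x < d -> rpow x r < eps.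
Proof.
  intros Hr He. exists (Rpower eps (/ r)). split. apply Rpower_pos.
  intros x Hx. destruct (Rle_dec x 0) as [H|H].
  - rewrite rpow_le0; auto.
  - rewrite rpow_pos by lra. rewrite Rabs_pos_eq in Hx by lra.
    replace eps with (Rpower (Rpower eps (/ r)) r).
    apply Rlt_Rpower_l; lra.
    rewrite Rpower_mult. rewrite Rinv_l by lra. apply Rpower_1; auto.
Qed.

Lemma cont_mult (f g : R -> R) x : continuous f x -> continuous g x ->
  continuous (fun y => f y * g y) x.
Proof. intros; apply (continuous_mult f g); auto. Qed.
Lemma cont_plus (f g : R -> R) x : continuous f x -> continuous g x ->
  continuous (fun y => f y + g y) x.
Proof. intros; apply (continuous_plus f g); auto. Qed.
Lemma cont_opp (f : R -> R) x : continuous f x -> continuous (fun y => - f y) x.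
Proof. intros; apply (continuous_opp f); auto. Qed.
Lemma cont_minus (f g : R -> R) x : continuous f x -> continuous g x ->
  continuous (fun y => f y - g y) x.
Proof. intros; apply cont_plus; auto; apply cont_opp; auto. Qed.
Lemma cont_sq (f : R -> R) x : continuous f x -> continuous (fun y => f y ^ 2) x.
Proof. intros H. apply continuous_ext with (fun y => f y * f y).
  intros y; simpl; rewrite Rmult_1_r; reflexivity. apply cont_mult; auto. Qed.
Lemma cont_comp (f g : R -> R) x : continuous f x -> continuous g (f x) ->
  continuous (fun y => g (f y)) x.
Proof. intros; apply (continuous_comp f g); auto. Qed.
Lemma cont_abs x : continuous Rabs x.
Proof. apply continuity_pt_filterlim. apply Rcontinuity_abs. Qed.

Lemma cont_Rpower r x : 0 < x -> continuous (fun y => Rpower y r) x.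
Proof.
  intros Hx. apply continuity_pt_filterlim. apply derivable_continuous_pt.
  exists (r * Rpower x (r - 1)). apply derivable_pt_lim_power; auto.
Qed.

Lemma cont_rpow r x0 : 0 < r -> continuous (fun x => rpow x r) x0.
Proof.
  intros Hr. destruct (Rtotal_order x0 0) as [H|[H|H]].
  - apply continuous_ext_loc with (fun _ => 0). 
    exists (mkposreal (- x0) ltac:(lra)). intros y Hy.
    cbn in Hy. unfold ball in Hy; cbn in Hy; unfold AbsRing_ball, abs, minus, plus, opp in Hy; cbn in Hy.
    rewrite rpow_le0; auto. apply Rabs_def2 in Hy. lra.
    apply continuous_const.
  - subst. apply filterlim_locally. intros eps.
    destruct (rpow_small r eps Hr (cond_pos eps)) as [d [Hd Hd2]].
    exists (mkposreal d Hd). intros y Hy.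
    unfold ball in Hy |- *; cbn in Hy |- *; unfold AbsRing_ball, abs, minus, plus, opp in Hy |- *; cbn in Hy |- *.
    rewrite (rpow_le0 0 r) by lra. replace (rpow y r + - 0) with (rpow y r) by ring.
    rewrite Rabs_pos_eq by apply rpow_ge0. apply Hd2. replace y with (y + - 0) by ring. auto.
  - apply continuous_ext_loc with (fun y => Rpower y r).
    exists (mkposreal x0 H). intros y Hy.
    cbn in Hy. unfold ball in Hy; cbn in Hy; unfold AbsRing_ball, abs, minus, plus, opp in Hy; cbn in Hy.
    apply Rabs_def2 in Hy. rewrite rpow_pos; auto; lra.
    apply cont_Rpower; auto.
Qed.

Lemma cont_rpow_abs r x0 : 0 < r -> continuous (fun x => rpow (Rabs x) r) x0.
Proof. intros Hr. apply (cont_comp Rabs (fun y => rpow y r)). apply cont_abs. apply cont_rpow; auto. Qed.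

Lemma cont_wgt M t : 1 < M -> continuous (wgt M) t.
Proof. intros HM. unfold wgt. apply cont_rpow. lra. Qed.

Lemma rpow_mult_sq p x :
  rpow (Rabs x) (p - 1) * x * x = rpow (Rabs x) (p + 1).
Proof.
  destruct (Req_dec x 0) as [H|H].
  - subst. rewrite Rabs_R0, !rpow_le0 by lra. ring.
  - assert (Hx : 0 < Rabs x) by (apply Rabs_pos_lt; auto).
    rewrite !rpow_pos by auto.
    replace (p + 1) with ((p - 1) + INR 2) by (simpl; ring).
    rewrite Rpower_plus, Rpower_pow by auto.
    rewrite Rmult_assoc. f_equal. simpl. rewrite Rmult_1_r.
    rewrite <- Rabs_mult. rewrite Rabs_pos_eq. auto. apply Rle_0_sqr.
Qed.


Lemma glb_correct E : Rbar_is_glb E (Rbar_glb E).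
Proof. unfold Rbar_glb. destruct (Rbar_ex_glb E); auto. Qed.
Lemma lub_correct E : Rbar_is_lub E (Rbar_lub E).
Proof. unfold Rbar_lub. destruct (Rbar_ex_lub E); auto. Qed.

Lemma liminf_lower (f : R -> R) a L :
  (forall eps, 0 < eps -> exists d, 0 < d /\ forall p, a - d < p < a -> L - eps <= f p) ->
  Rbar_le (Finite L) (liminf_left f a).
Proof.
  intros H.
  assert (K : forall eps, 0 < eps -> Rbar_le (Finite (L - eps)) (liminf_left f a)).
  { intros eps He. destruct (H eps He) as [d [Hd Hf]].
    unfold liminf_left.
    destruct (lub_correct (fun y => exists d, 0 < d /\
       y = Rbar_glb (fun z => exists p, a - d < p < a /\ z = Finite (f p)))) as [Hub _].
    eapply Rbar_le_trans; [| apply Hub; exists d; split; [exact Hd| reflexivity]].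
    destruct (glb_correct (fun z => exists p, a - d < p < a /\ z = Finite (f p))) as [_ Hg].
    apply Hg. intros z [p [Hp ->]]. simpl. apply Hf; auto. }
  destruct (liminf_left f a) as [l| |] eqn:E.
  - simpl. apply Rnot_lt_le. intros Hl.
    specialize (K ((L - l)/2) ltac:(lra)). simpl in K. lra.
  - simpl; auto.
  - specialize (K 1 ltac:(lra)). simpl in K. contradiction.
Qed.

Lemma liminf_le_ext (f g : R -> R) a d0 : 0 < d0 ->
  (forall p, a - d0 < p < a -> f p = g p) ->
  Rbar_le (liminf_left f a) (liminf_left g a).
Proof.
  intros Hd0 Hfg. unfold liminf_left.
  destruct (lub_correct (fun y => exists d, 0 < d /\
       y = Rbar_glb (fun z => exists p, a - d < p < a /\ z = Finite (f p)))) as [_ Hl].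
  apply Hl. intros y [d [Hd ->]].
  destruct (lub_correct (fun y => exists d, 0 < d /\
       y = Rbar_glb (fun z => exists p, a - d < p < a /\ z = Finite (g p)))) as [Hu _].
  set (d' := Rmin d d0).
  assert (Hd' : 0 < d') by (unfold d'; apply Rmin_glb_lt; auto).
  eapply Rbar_le_trans.
  2: { apply Hu. exists d'. split; [exact Hd'| reflexivity]. }
  eapply Rbar_le_trans.
  apply Rbar_glb_subset with (E2 := fun z => exists p, a - d' < p < a /\ z = Finite (f p)).
  { intros z [p [Hp ->]]. exists p. split; auto. split; [|lra].
    assert (d' <= d) by apply Rmin_l. lra. }
  assert (Heq : Rbar_glb (fun z => exists p, a - d' < p < a /\ z = Finite (f p)) =
                Rbar_glb (fun z => exists p, a - d' < p < a /\ z = Finite (g p))).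
  2: { rewrite Heq. apply Rbar_le_refl. }
  apply Rbar_glb_rw. intros z; split; intros [p [Hp ->]]; exists p; split; auto.
  rewrite Hfg; auto. split; [|lra]. assert (d' <= d0) by apply Rmin_r. lra.
  rewrite Hfg; auto. split; [|lra]. assert (d' <= d0) by apply Rmin_r. lra.
Qed.

Lemma liminf_ext (f g : R -> R) a d0 : 0 < d0 ->
  (forall p, a - d0 < p < a -> f p = g p) ->
  liminf_left f a = liminf_left g a.
Proof.
  intros Hd H. apply Rbar_le_antisym; eapply liminf_le_ext; eauto.
  intros; symmetry; auto.
Qed.


Lemma ballR (x : R) (e : posreal) y : ball x e y <-> Rabs (y - x) < e.
Proof. unfold ball; simpl; unfold AbsRing_ball, abs, minus, plus, opp; simpl. tauto. Qed.

Definition modc (f : R -> R) (L : R) t := if Rle_dec t 0 then L else f t.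

Lemma modc_pos f L t : 0 < t -> modc f L t = f t.
Proof. intros H; unfold modc; destruct (Rle_dec t 0); lra. Qed.

Lemma modc_cont (f : R -> R) L :
  (forall t, 0 < t <= 1 -> continuous f t) ->
  filterlim f (at_right 0) (locally L) ->
  forall t, t <= 1 -> continuous (modc f L) t.
Proof.
  intros Hc Hl t Ht. destruct (Rtotal_order t 0) as [H|[H|H]].
  - apply continuous_ext_loc with (fun _ => L).
    apply locally_interval with m_infty (Finite 0); simpl; auto.
    intros y _ Hy. unfold modc; destruct (Rle_dec y 0); lra.
    apply continuous_const.
  - subst. apply filterlim_locally. intros eps.
    apply filterlim_locally with (eps := eps) in Hl.
    destruct Hl as [d Hd]. exists d. intros y Hy.
    unfold modc. destruct (Rle_dec y 0); destruct (Rle_dec 0 0); try lra.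
    apply ball_center. apply Hd; auto. lra.
  - apply continuous_ext_loc with f.
    apply locally_interval with (Finite 0) p_infty; simpl; auto.
    intros y Hy _. rewrite modc_pos; auto.
    apply Hc; lra.
Qed.

Definition zhyp M p m V tz i :=
  2 < M /\ 1 < p /\ radial_sol M p V /\ nodal_points m V tz /\ 0 < V 0 /\ (i < m)%nat.

Lemma tz_le m V tz : nodal_points m V tz ->
  forall j k, (j <= k <= m)%nat -> tz j <= tz k.
Proof.
  intros [_ [_ [Hinc _]]] j k Hjk. induction k.
  - assert (j = 0%nat) by lia. subst; lra.
  - destruct (Nat.eq_dec j (S k)). subst; lra.
    assert (tz j <= tz k) by (apply IHk; lia).
    assert (tz k < tz (S k)) by (apply Hinc; lia). lra.
Qed.

Lemma tz_lt m V tz : nodal_points m V tz ->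
  forall j k, (j < k <= m)%nat -> tz j < tz k.
Proof.
  intros Hn j k Hjk. destruct k. lia.
  assert (tz j <= tz k) by (apply (tz_le m V tz Hn); lia).
  destruct Hn as [_ [_ [Hinc _]]].
  assert (tz k < tz (S k)) by (apply Hinc; lia). lra.
Qed.


Lemma zone_bounds M p m V tz i : zhyp M p m V tz i ->
  0 <= tz i /\ tz i < tz (S i) /\ tz (S i) <= 1.
Proof.
  intros (HM & Hp & Hr & Hn & HV & Hi).
  assert (H0 : tz 0%nat = 0) by apply Hn.
  assert (Hm : tz m = 1) by apply Hn.
  split. rewrite <- H0. apply (tz_le m V tz Hn); lia.
  split. apply (tz_lt m V tz Hn); lia.
  rewrite <- Hm. apply (tz_le m V tz Hn); lia.
Qed.

Lemma zone_Vb M p m V tz i : zhyp M p m V tz i -> V (tz (S i)) = 0.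
Proof. intros (HM & Hp & Hr & Hn & HV & Hi). apply Hn. lia. Qed.

Lemma zone_Va M p m V tz i : zhyp M p m V tz i ->
  tz i = 0 \/ (0 < tz i /\ V (tz i) = 0).
Proof.
  intros H. pose proof H as (HM & Hp & Hr & Hn & HV & Hi).
  destruct i. left; apply Hn. right. split.
  pose proof Hn as [H0 _]. rewrite <- H0. apply (tz_lt m V tz); auto. lia.
  apply Hn. lia.
Qed.

Lemma zone_nz M p m V tz i : zhyp M p m V tz i ->
  forall t, tz i < t < tz (S i) -> V t <> 0.
Proof.
  intros H t Ht HVt. pose proof (zone_bounds _ _ _ _ _ _ H) as Hb.
  destruct H as (HM & Hp & Hr & Hn & HV & Hi).
  pose proof Hn as (_ & _ & _ & _ & Hz).
  destruct (Hz t ltac:(lra) HVt) as [j [Hj ->]].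
  destruct (Compare_dec.le_lt_dec j i).
  - assert (tz j <= tz i) by (apply (tz_le m V tz Hn); lia). lra.
  - assert (tz (S i) <= tz j) by (apply (tz_le m V tz Hn); lia). lra.
Qed.

Lemma V_cont M p V : radial_sol M p V -> forall t, 0 < t <= 1 -> continuous V t.
Proof.
  intros [[_ [Hd _]] _] t Ht. apply (ex_derive_continuous (K := R_AbsRing) (V := R_NormedModule)).
  apply Hd; auto.
Qed.
Lemma V'_cont M p V : radial_sol M p V -> forall t, 0 < t <= 1 -> continuous (Derive V) t.
Proof. intros [[_ [Hd _]] _] t Ht. apply Hd; auto. Qed.
Lemma V_lim M p V : radial_sol M p V -> filterlim V (at_right 0) (locally (V 0)).
Proof. intros [_ [H _]]; auto. Qed.
Lemma V'_lim M p V : radial_sol M p V -> filterlim (Derive V) (at_right 0) (locally 0).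
Proof. intros [_ [_ [H _]]]; auto. Qed.

Lemma modc_V_cont M p V : radial_sol M p V -> forall t, t <= 1 -> continuous (modc V (V 0)) t.
Proof. intros H. apply modc_cont. apply (V_cont M p V H). apply (V_lim M p V H). Qed.
Lemma modc_V'_cont M p V : radial_sol M p V -> forall t, t <= 1 -> continuous (modc (Derive V) 0) t.
Proof. intros H. apply modc_cont. apply (V'_cont M p V H). apply (V'_lim M p V H). Qed.
Lemma modc_V_eq V t : 0 <= t -> modc V (V 0) t = V t.
Proof. intros H; unfold modc; destruct (Rle_dec t 0). f_equal; lra. auto. Qed.


Lemma cont_eps (f : R -> R) x eps : continuous f x -> 0 < eps ->
  exists d, 0 < d /\ forall y, Rabs (y - x) < d -> Rabs (f y - f x) < eps.
Proof.
  intros Hc He. apply filterlim_locally with (eps := mkposreal eps He) in Hc.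
  destruct Hc as [d Hd]. exists d. split. apply cond_pos.
  intros y Hy. apply (ballR (f x) (mkposreal eps He)). apply Hd. apply ballR; auto.
Qed.

Lemma cont_bound (G : R -> R) a b : a <= b ->
  (forall t, a <= t <= b -> continuous G t) ->
  exists B, 0 <= B /\ forall t, a <= t <= b -> Rabs (G t) <= B.
Proof.
  intros Hab Hc.
  destruct (continuity_ab_maj (fun x => Rabs (G x)) a b Hab) as [x [Hx _]].
  intros c Hcc. apply continuity_pt_filterlim.
  apply (cont_comp G Rabs). apply Hc; auto. apply cont_abs.
  exists (Rabs (G x)). split. apply Rabs_pos. auto.
Qed.

Lemma ex_RInt_cont_sub (G : R -> R) a b c d : a <= c -> c <= d -> d <= b ->
  (forall t, a <= t <= b -> continuous G t) -> ex_RInt G c d.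
Proof.
  intros H1 H2 H3 Hc. apply (ex_RInt_continuous (V := R_CompleteNormedModule)). intros z Hz.
  rewrite Rmin_left in Hz by lra. rewrite Rmax_right in Hz by lra. apply Hc; lra.
Qed.

Lemma RInt_limit_ends (G F : R -> R) a b : a < b ->
  (forall t, a <= t <= b -> continuous G t) ->
  continuous F a -> continuous F b ->
  (forall c d, a < c -> c < d -> d < b -> RInt G c d = F d - F c) ->
  RInt G a b = F b - F a.
Proof.
  intros Hab Hc Fa Fb HI.
  destruct (cont_bound G a b ltac:(lra) Hc) as [B [HB0 HB]].
  set (J := RInt G a b).
  assert (Key : forall eps, 0 < eps -> Rabs (J - (F b - F a)) <= 4 * eps).
  { intros eps He.
    destruct (cont_eps F a eps Fa He) as [d1 [Hd1 H1]].
    destruct (cont_eps F b eps Fb He) as [d2 [Hd2 H2]].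
    set (h := Rmin (Rmin (d1/2) (d2/2)) (Rmin ((b-a)/3) (eps/(B+1)))).
    assert (Hh0 : 0 < h).
    { unfold h. repeat apply Rmin_glb_lt; try lra. apply Rdiv_lt_0_compat; lra. }
    assert (Hh1 : h <= d1/2) by (unfold h; eapply Rle_trans; [apply Rmin_l|apply Rmin_l]).
    assert (Hh2 : h <= d2/2) by (unfold h; eapply Rle_trans; [apply Rmin_l|apply Rmin_r]).
    assert (Hh3 : h <= (b-a)/3) by (unfold h; eapply Rle_trans; [apply Rmin_r|apply Rmin_l]).
    assert (Hh4 : h <= eps/(B+1)) by (unfold h; eapply Rle_trans; [apply Rmin_r|apply Rmin_r]).
    assert (HhB : h * B <= eps).
    { apply Rle_trans with (eps / (B+1) * B). apply Rmult_le_compat_r; lra.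
      unfold Rdiv. rewrite Rmult_assoc. rewrite <- (Rmult_1_r eps) at 2.
      apply Rmult_le_compat_l. lra.
      apply Rmult_le_reg_l with (B+1). lra. field_simplify; lra. }
    set (c := a + h). set (d := b - h).
    assert (E1 : J = RInt G a c + RInt G c d + RInt G d b).
    { unfold J. rewrite <- (RInt_Chasles G a c b). rewrite <- (RInt_Chasles G c d b).
      unfold plus; simpl; ring.
      all: apply (ex_RInt_cont_sub G a b); (exact Hc || (unfold c, d; lra)). }
    rewrite E1, (HI c d) by (unfold c, d; lra).
    assert (A1 : Rabs (RInt G a c) <= (c - a) * B).
    { apply abs_RInt_le_const. unfold c; lra. apply (ex_RInt_cont_sub G a b); (exact Hc || (unfold c; lra)).
      intros t Ht; apply HB; unfold c in Ht; lra. }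
    assert (A2 : Rabs (RInt G d b) <= (b - d) * B).
    { apply abs_RInt_le_const. unfold d; lra. apply (ex_RInt_cont_sub G a b); (exact Hc || (unfold d; lra)).
      intros t Ht; apply HB; unfold d in Ht; lra. }
    assert (A3 : Rabs (F c - F a) < eps) by (apply H1; unfold c; rewrite Rabs_pos_eq; lra).
    assert (A4 : Rabs (F d - F b) < eps) by (apply H2; unfold d; rewrite Rabs_left; lra).
    unfold c, d in *.
    replace (RInt G a (a + h) + (F (b - h) - F (a + h)) + RInt G (b - h) b - (F b - F a))
      with (RInt G a (a + h) + RInt G (b - h) b + (F (b - h) - F b) - (F (a + h) - F a)) by ring.
    eapply Rle_trans. apply Rabs_triang.
    eapply Rle_trans. apply Rplus_le_compat_r. apply Rabs_triang.
    eapply Rle_trans. apply Rplus_le_compat_r. apply Rplus_le_compat_r. apply Rabs_triang.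
    rewrite Rabs_Ropp.
    replace (a + h - a) with h in A1 by ring. replace (b - (b - h)) with h in A2 by ring.
    lra. }
  destruct (Req_dec (J - (F b - F a)) 0) as [Z|Z]. lra.
  exfalso. assert (Hp : 0 < Rabs (J - (F b - F a))) by (apply Rabs_pos_lt; auto).
  specialize (Key (Rabs (J - (F b - F a)) / 8) ltac:(lra)). lra.
Qed.


Lemma is_derive_mult_R (f g : R -> R) x df dg :
  is_derive f x df -> is_derive g x dg ->
  is_derive (fun y => f y * g y) x (df * g x + f x * dg).
Proof.
  intros H1 H2. apply (is_derive_mult f g x df dg H1 H2). intros; apply Rmult_comm.
Qed.

Lemma RInt_cont_eq (f g : R -> R) a b : a <= b ->
  (forall t, a <= t <= b -> continuous g t) ->
  (forall t, a < t < b -> f t = g t) ->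
  ex_RInt f a b /\ RInt f a b = RInt g a b.
Proof.
  intros Hab Hc He. split.
  - apply (ex_RInt_ext g). intros x Hx. rewrite Rmin_left, Rmax_right in Hx by lra.
    symmetry; apply He; auto. apply (ex_RInt_cont_sub g a b); auto; lra.
  - apply RInt_ext. intros x Hx. rewrite Rmin_left, Rmax_right in Hx by lra. apply He; auto.
Qed.

Definition G1c M p V t := wgt M t * rpow (Rabs (modc V (V 0) t)) (p + 1).
Definition G2c M V t := wgt M t * modc (Derive V) 0 t ^ 2.

Lemma G1c_cont M p V : 2 < M -> 1 < p -> radial_sol M p V ->
  forall t, t <= 1 -> continuous (G1c M p V) t.
Proof.
  intros HM Hp Hr t Ht. unfold G1c. apply cont_mult. apply cont_wgt; lra.
  apply (cont_comp (modc V (V 0)) (fun x => rpow (Rabs x) (p+1))).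
  apply (modc_V_cont M p V Hr); auto. apply cont_rpow_abs; lra.
Qed.

Lemma G2c_cont M p V : 2 < M -> radial_sol M p V ->
  forall t, t <= 1 -> continuous (G2c M V) t.
Proof.
  intros HM Hr t Ht. unfold G2c. apply cont_mult. apply cont_wgt; lra.
  apply cont_sq. apply (modc_V'_cont M p V Hr); auto.
Qed.

Lemma I1_eq M p m V tz i : zhyp M p m V tz i ->
  ex_RInt (fun t => wgt M t * rpow (Rabs (V t)) (p + 1)) (tz i) (tz (S i)) /\
  RInt (fun t => wgt M t * rpow (Rabs (V t)) (p + 1)) (tz i) (tz (S i)) =
  RInt (G1c M p V) (tz i) (tz (S i)).
Proof.
  intros H. pose proof (zone_bounds _ _ _ _ _ _ H) as Hb.
  destruct H as (HM & Hp & Hr & _).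
  apply RInt_cont_eq. lra. intros t Ht; apply G1c_cont; auto; lra.
  intros t Ht. unfold G1c. rewrite modc_pos by lra. auto.
Qed.

Lemma I2_eq M p m V tz i : zhyp M p m V tz i ->
  ex_RInt (fun t => wgt M t * Derive V t ^ 2) (tz i) (tz (S i)) /\
  RInt (fun t => wgt M t * Derive V t ^ 2) (tz i) (tz (S i)) =
  RInt (G2c M V) (tz i) (tz (S i)).
Proof.
  intros H. pose proof (zone_bounds _ _ _ _ _ _ H) as Hb.
  destruct H as (HM & Hp & Hr & _).
  apply RInt_cont_eq. lra. intros t Ht; apply (G2c_cont M p); auto; lra.
  intros t Ht. unfold G2c. rewrite modc_pos by lra. auto.
Qed.

Lemma energy M p m V tz i : zhyp M p m V tz i ->
  RInt (fun t => wgt M t * rpow (Rabs (V t)) (p + 1)) (tz i) (tz (S i)) =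
  RInt (fun t => wgt M t * Derive V t ^ 2) (tz i) (tz (S i)).
Proof.
  intros H. pose proof (zone_bounds _ _ _ _ _ _ H) as Hb.
  pose proof (zone_Va _ _ _ _ _ _ H) as Ha. pose proof (zone_Vb _ _ _ _ _ _ H) as HVb.
  destruct (I1_eq _ _ _ _ _ _ H) as [E1 ->]. destruct (I2_eq _ _ _ _ _ _ H) as [E2 ->].
  destruct H as (HM & Hp & Hr & _).
  set (a := tz i) in *. set (b := tz (S i)) in *.
  set (F := fun t => wgt M t * modc (Derive V) 0 t * modc V (V 0) t).
  assert (HF : forall t, t <= 1 -> continuous F t).
  { intros t Ht. unfold F. apply cont_mult. apply cont_mult. apply cont_wgt; lra.
    apply (modc_V'_cont M p V Hr); auto. apply (modc_V_cont M p V Hr); auto. }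
  assert (Hc : forall t, a <= t <= b -> continuous (fun t => G2c M V t - G1c M p V t) t).
  { intros t Ht. apply cont_minus. apply (G2c_cont M p); auto; lra. apply G1c_cont; auto; lra. }
  assert (Key : RInt (fun t => G2c M V t - G1c M p V t) a b = F b - F a).
  { apply RInt_limit_ends; auto; try lra. apply HF; lra. apply HF; lra.
    intros c d Hac Hcd Hdb.
    set (F0 := fun s => (wgt M s * Derive V s) * V s).
    assert (HD : forall x, c <= x <= d -> is_derive F0 x (G2c M V x - G1c M p V x)).
    { intros x Hx. destruct Hr as [[_ [Hd _]] [_ [_ Hode]]].
      assert (Hx0 : 0 < x < 1) by lra.
      pose proof (is_derive_mult_R _ _ x _ _ (Hode x Hx0) (Derive_correct V x (proj1 (Hd x ltac:(lra))))) as K.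
      unfold F0. replace (G2c M V x - G1c M p V x) with
        (- (wgt M x * (rpow (Rabs (V x)) (p - 1) * V x)) * V x + wgt M x * Derive V x * Derive V x).
      exact K. unfold G2c, G1c. rewrite !modc_pos by lra.
      rewrite <- (rpow_mult_sq p (V x)). ring. }
    assert (HI := is_RInt_derive F0 (fun x => G2c M V x - G1c M p V x) c d).
    rewrite Rmin_left, Rmax_right in HI by lra.
    rewrite (is_RInt_unique _ _ _ _ (HI HD (fun x Hx => Hc x ltac:(lra)))).
    unfold F, F0, minus, plus, opp; simpl. rewrite !modc_pos by lra. ring. }
  assert (Fa0 : F a = 0).
  { unfold F. destruct Ha as [Ha|[Ha0 Ha]].
    rewrite Ha. unfold wgt. rewrite rpow_le0 by lra. ring.
    rewrite !modc_pos by lra. rewrite Ha. ring. }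
  assert (Fb0 : F b = 0). { unfold F. rewrite !modc_pos by lra. rewrite HVb. ring. }
  pose proof (RInt_minus (V := R_CompleteNormedModule) (G2c M V) (G1c M p V) a b) as RM.
  unfold minus, plus, opp in RM; simpl in RM. unfold Rminus in Key. rewrite RM in Key. lra.
  apply (ex_RInt_cont_sub _ a b); try lra. intros; apply (G2c_cont M p); auto; lra.
  apply (ex_RInt_cont_sub _ a b); try lra. intros; apply G1c_cont; auto; lra.
Qed.


Lemma RInt_constR a b (k : R) : RInt (fun _ => k) a b = (b - a) * k.
Proof. rewrite (RInt_const (V := R_CompleteNormedModule)). reflexivity. Qed.

Lemma ex_RInt_constR a b (k : R) : ex_RInt (fun _ => k) a b.
Proof. exists (scal (b - a) k). apply (is_RInt_const (V := R_NormedModule)). Qed.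

Lemma RInt_ge0 (g : R -> R) a b : a <= b -> ex_RInt g a b ->
  (forall t, a < t < b -> 0 <= g t) -> 0 <= RInt g a b.
Proof.
  intros Hab Hex Hg. rewrite <- (Rmult_0_r (b - a)), <- RInt_constR.
  apply RInt_le; auto. apply ex_RInt_constR.
Qed.

Lemma RInt_le_const (g : R -> R) a b k : a <= b -> ex_RInt g a b ->
  (forall t, a < t < b -> g t <= k) -> RInt g a b <= (b - a) * k.
Proof.
  intros Hab Hex Hg. rewrite <- RInt_constR.
  apply RInt_le; auto. apply ex_RInt_constR.
Qed.

Lemma RInt_plusR (f g : R -> R) a b : ex_RInt f a b -> ex_RInt g a b ->
  RInt (fun t => f t + g t) a b = RInt f a b + RInt g a b.
Proof. intros; apply (RInt_plus (V := R_CompleteNormedModule)); auto. Qed.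
Lemma ex_RInt_plusR (f g : R -> R) a b : ex_RInt f a b -> ex_RInt g a b ->
  ex_RInt (fun t => f t + g t) a b.
Proof. intros; apply (ex_RInt_plus (V := R_NormedModule)); auto. Qed.
Lemma RInt_scalR (f : R -> R) a b k : ex_RInt f a b ->
  RInt (fun t => k * f t) a b = k * RInt f a b.
Proof. intros; apply (RInt_scal (V := R_CompleteNormedModule)); auto. Qed.
Lemma ex_RInt_scalR (f : R -> R) a b k : ex_RInt f a b ->
  ex_RInt (fun t => k * f t) a b.
Proof. intros; apply (ex_RInt_scal (V := R_NormedModule)); auto. Qed.

Lemma RInt_chaslesR (f : R -> R) a b c : ex_RInt f a b -> ex_RInt f b c ->
  RInt f a b + RInt f b c = RInt f a c.
Proof. intros; apply (RInt_Chasles (V := R_CompleteNormedModule)); auto. Qed.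

Lemma RInt_pos (g : R -> R) a b c0 : a < c0 < b ->
  (forall t, a <= t <= b -> continuous g t) ->
  (forall t, a <= t <= b -> 0 <= g t) -> 0 < g c0 -> 0 < RInt g a b.
Proof.
  intros Hc0 Hc Hg Hpos.
  destruct (cont_eps g c0 (g c0 / 2) (Hc c0 ltac:(lra)) ltac:(lra)) as [d [Hd Hd2]].
  set (h := Rmin (d/2) (Rmin ((c0 - a)/2) ((b - c0)/2))).
  assert (Hh0 : 0 < h) by (unfold h; repeat apply Rmin_glb_lt; lra).
  assert (Hh1 : h <= d/2) by apply Rmin_l.
  assert (Hh2 : h <= (c0-a)/2) by (unfold h; eapply Rle_trans; [apply Rmin_r|apply Rmin_l]).
  assert (Hh3 : h <= (b-c0)/2) by (unfold h; eapply Rle_trans; [apply Rmin_r|apply Rmin_r]).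
  assert (ex : forall x y, a <= x -> x <= y -> y <= b -> ex_RInt g x y).
  { intros x y H1 H2 H3. apply (ex_RInt_cont_sub g a b); auto. }
  rewrite <- (RInt_chaslesR g a (c0 - h) b) by (apply ex; lra).
  rewrite <- (RInt_chaslesR g (c0 - h) (c0 + h) b) by (apply ex; lra).
  assert (0 <= RInt g a (c0 - h)) by (apply RInt_ge0; [lra|apply ex; lra|intros; apply Hg; lra]).
  assert (0 <= RInt g (c0 + h) b) by (apply RInt_ge0; [lra|apply ex; lra|intros; apply Hg; lra]).
  assert ((c0 + h - (c0 - h)) * (g c0 / 2) <= RInt g (c0 - h) (c0 + h)).
  { rewrite <- RInt_constR. apply RInt_le. lra. apply ex_RInt_constR. apply ex; lra.
    intros x Hx. assert (Rabs (g x - g c0) < g c0 / 2) by (apply Hd2; apply Rabs_def1; lra).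
    apply Rabs_def2 in H1. lra. }
  assert (0 < (c0 + h - (c0 - h)) * (g c0 / 2)) by (apply Rmult_lt_0_compat; lra).
  lra.
Qed.

Lemma maxabs_attained (V : R -> R) a b s :
  a <= s <= b -> (forall t, a <= t <= b -> Rabs (V t) <= Rabs (V s)) ->
  maxabs V a b = Rabs (V s).
Proof.
  intros Hs Hmax. unfold maxabs.
  rewrite (is_lub_Rbar_unique _ (Finite (Rabs (V s)))). reflexivity.
  split.
  - intros y [t [Ht ->]]. simpl. apply Hmax; auto.
  - intros b' Hb'. apply Hb'. exists s; auto.
Qed.


Lemma rpow_le_base x y r : 0 <= x <= y -> 0 < r -> rpow x r <= rpow y r.
Proof.
  intros Hxy Hr. destruct (Req_dec x 0) as [->|Hx].
  rewrite (rpow_le0 0) by lra. apply rpow_ge0.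
  rewrite !rpow_pos by lra. apply Rle_Rpower_l; lra.
Qed.

Lemma wgt_pos M t : 0 < t -> 0 < wgt M t.
Proof. intros; unfold wgt; rewrite rpow_pos by auto; apply Rpower_pos. Qed.
Lemma wgt_ge0 M t : 0 <= wgt M t.
Proof. apply rpow_ge0. Qed.

Lemma zone_E1_pos M p m V tz i : zhyp M p m V tz i ->
  0 < RInt (G1c M p V) (tz i) (tz (S i)).
Proof.
  intros H. pose proof (zone_bounds _ _ _ _ _ _ H) as Hb.
  pose proof (zone_nz _ _ _ _ _ _ H) as Hnz.
  destruct H as (HM & Hp & Hr & _).
  apply RInt_pos with ((tz i + tz (S i)) / 2). lra.
  intros; apply G1c_cont; auto; lra.
  intros t _. unfold G1c. apply Rmult_le_pos. apply wgt_ge0. apply rpow_ge0.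
  unfold G1c. rewrite modc_pos by lra. apply Rmult_lt_0_compat. apply wgt_pos; lra.
  rewrite rpow_pos. apply Rpower_pos. apply Rabs_pos_lt. apply Hnz; lra.
Qed.

Lemma zone_max M p m V tz i : zhyp M p m V tz i ->
  (forall t, tz i <= t <= tz (S i) -> Rabs (V t) <= maxabs V (tz i) (tz (S i))).
Proof.
  intros H. pose proof (zone_bounds _ _ _ _ _ _ H) as Hb.
  destruct H as (HM & Hp & Hr & _).
  destruct (continuity_ab_maj (fun t => Rabs (modc V (V 0) t)) (tz i) (tz (S i))) as [s [Hs2 Hs]].
  lra. intros c Hc. apply continuity_pt_filterlim.
  apply (cont_comp (modc V (V 0)) Rabs). apply (modc_V_cont M p V Hr); lra. apply cont_abs.
  rewrite (maxabs_attained V _ _ s); auto.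
  intros t Ht. specialize (Hs2 t Ht). rewrite !modc_V_eq in Hs2 by lra. auto.
  intros t Ht. specialize (Hs2 t Ht). rewrite !modc_V_eq in Hs2 by lra. auto.
Qed.

Lemma ftc_pow M t b : 2 < M -> 0 < t <= b ->
  RInt (fun s => Rpower s (1 - M)) t b = (Rpower t (2 - M) - Rpower b (2 - M)) / (M - 2).
Proof.
  intros HM Htb.
  assert (HI := is_RInt_derive (V := R_CompleteNormedModule)
     (fun s => / (2 - M) * Rpower s (2 - M)) (fun s => Rpower s (1 - M)) t b).
  rewrite Rmin_left, Rmax_right in HI by lra.
  assert (D1 : forall x, t <= x <= b -> is_derive (fun s => / (2 - M) * Rpower s (2 - M)) x (Rpower x (1 - M))).
  { intros x Hx. apply is_derive_Reals.
    replace (Rpower x (1 - M)) with (/ (2 - M) * ((2 - M) * Rpower x (2 - M - 1))).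
    apply (derivable_pt_lim_scal (fun s => Rpower s (2 - M))).
    apply derivable_pt_lim_power. lra.
    replace (2 - M - 1) with (1 - M) by ring. field. lra. }
  assert (D2 : forall x, t <= x <= b -> continuous (fun s => Rpower s (1 - M)) x).
  { intros x Hx. apply cont_Rpower. lra. }
  rewrite (is_RInt_unique _ _ _ _ (HI D1 D2)).
  unfold minus, plus, opp; simpl. field. lra.
Qed.

Lemma amgm_pt lam w d : 0 < w -> 0 < lam ->
  2 * lam * Rabs d <= lam ^ 2 * / w + w * d ^ 2.
Proof.
  intros Hw Hl.
  assert (H : 0 <= (lam - w * Rabs d) ^ 2 * / w).
  { apply Rmult_le_pos. apply pow2_ge_0. left; apply Rinv_0_lt_compat; auto. }
  replace (d ^ 2) with (Rabs d ^ 2) by (apply pow2_abs).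
  replace (lam ^ 2 * / w + w * Rabs d ^ 2) with
    ((lam - w * Rabs d) ^ 2 * / w + 2 * lam * Rabs d) by (field; lra).
  lra.
Qed.

Lemma V_bound M p m V tz i : zhyp M p m V tz i ->
  forall t, tz i < t <= tz (S i) ->
  wgt M t * V t ^ 2 <= RInt (G2c M V) (tz i) (tz (S i)) / (M - 2).
Proof.
  intros H t Ht. pose proof (zone_bounds _ _ _ _ _ _ H) as Hb.
  pose proof (zone_Vb _ _ _ _ _ _ H) as HVb.
  destruct H as (HM & Hp & Hr & _).
  set (a := tz i) in *. set (b := tz (S i)) in *.
  set (E := RInt (G2c M V) a b).
  pose proof Hr as [[_ [Hd _]] _].
  assert (HG2c : forall x y, a <= x -> x <= y -> y <= b -> ex_RInt (G2c M V) x y).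
  { intros x y H1 H2 H3. apply (ex_RInt_cont_sub _ a b); auto. intros; apply (G2c_cont M p); auto; lra. }
  set (B := RInt (fun s => wgt M s * Derive V s ^ 2) t b).
  assert (HB : B <= E).
  { unfold B, E. rewrite <- (RInt_chaslesR _ a t b) by (apply HG2c; lra).
    assert (0 <= RInt (G2c M V) a t).
    { apply RInt_ge0. lra. apply HG2c; lra. intros; unfold G2c.
      apply Rmult_le_pos. apply wgt_ge0. apply pow2_ge_0. }
    rewrite (RInt_ext (G2c M V) (fun s => wgt M s * Derive V s ^ 2) t b). lra.
    intros x Hx. rewrite Rmin_left, Rmax_right in Hx by lra. unfold G2c. rewrite modc_pos by lra. auto. }
  assert (HE0 : 0 <= E).
  { apply RInt_ge0. lra. apply HG2c; lra. intros; unfold G2c.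
    apply Rmult_le_pos. apply wgt_ge0. apply pow2_ge_0. }
  assert (HVt : V t = - RInt (Derive V) t b).
  { assert (HI := is_RInt_derive (V := R_CompleteNormedModule) V (Derive V) t b).
    rewrite Rmin_left, Rmax_right in HI by lra.
    assert (D1 : forall x, t <= x <= b -> is_derive V x (Derive V x)).
    { intros x Hx. apply Derive_correct. apply Hd; lra. }
    assert (D2 : forall x, t <= x <= b -> continuous (Derive V) x).
    { intros x Hx. apply Hd; lra. }
    rewrite (is_RInt_unique _ _ _ _ (HI D1 D2)). unfold minus, plus, opp; simpl. lra. }
  set (K := Rpower t (2 - M) / (M - 2)).
  assert (HK : 0 < K) by (unfold K; apply Rdiv_lt_0_compat; [apply Rpower_pos|lra]).
  assert (HA : RInt (fun s => Rpower s (1 - M)) t b <= K).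
  { rewrite ftc_pow by lra. unfold K. unfold Rdiv. apply Rmult_le_compat_r.
    left; apply Rinv_0_lt_compat; lra. pose proof (Rpower_pos b (2 - M)). lra. }
  assert (exs : forall (f : R -> R), (forall x, t <= x <= b -> continuous f x) -> ex_RInt f t b).
  { intros f Hf. apply (ex_RInt_cont_sub f t b); auto; lra. }
  assert (Hc1 : forall x, t <= x <= b -> continuous (fun s => Rpower s (1 - M)) x).
  { intros; apply cont_Rpower; lra. }
  assert (Hc2 : forall x, t <= x <= b -> continuous (fun s => wgt M s * Derive V s ^ 2) x).
  { intros; apply cont_mult. apply cont_wgt; lra. apply cont_sq. apply Hd; lra. }
  assert (Hc3 : forall x, t <= x <= b -> continuous (Derive V) x).
  { intros; apply Hd; lra. }
  assert (Key : forall lam, 0 < lam -> 2 * lam * Rabs (V t) <= lam ^ 2 * K + E).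
  { intros lam Hl. rewrite HVt, Rabs_Ropp.
    eapply Rle_trans. apply Rmult_le_compat_l. lra. apply abs_RInt_le. lra. apply exs; auto.
    rewrite <- RInt_scalR.
    2: { apply exs. intros; apply (cont_comp (Derive V) Rabs); auto. apply cont_abs. }
    eapply Rle_trans with (RInt (fun s => lam ^ 2 * Rpower s (1 - M) + wgt M s * Derive V s ^ 2) t b).
    apply RInt_le. lra.
    apply ex_RInt_scalR. apply exs. intros; apply (cont_comp (Derive V) Rabs); auto. apply cont_abs.
    apply ex_RInt_plusR. apply ex_RInt_scalR. apply exs; auto. apply exs; auto.
    intros x Hx. replace (Rpower x (1 - M)) with (/ wgt M x).
    apply amgm_pt. apply wgt_pos; lra. auto.
    unfold wgt. rewrite rpow_pos by lra. rewrite <- Rpower_Ropp. f_equal; ring.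
    rewrite RInt_plusR, RInt_scalR. fold B.
    apply Rplus_le_compat. apply Rmult_le_compat_l. apply pow2_ge_0. auto. auto.
    apply exs; auto. apply ex_RInt_scalR, exs; auto. apply exs; auto. }
  assert (HV2 : V t ^ 2 <= E * K).
  { destruct (Req_dec (V t) 0) as [Z|Z].
    rewrite Z. replace (0 ^ 2) with 0 by ring. apply Rmult_le_pos; lra.
    assert (Hpos : 0 < Rabs (V t)) by (apply Rabs_pos_lt; auto).
    specialize (Key (Rabs (V t) / K) ltac:(apply Rdiv_lt_0_compat; auto)).
    replace (V t ^ 2) with (Rabs (V t) ^ 2) by (apply pow2_abs).
    assert (Rabs (V t) ^ 2 / K <= E).
    { replace (Rabs (V t) ^ 2 / K) with (2 * (Rabs (V t) / K) * Rabs (V t) - (Rabs (V t) / K) ^ 2 * K)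
        by (field; lra). lra. }
    apply Rmult_le_reg_r with (/ K). apply Rinv_0_lt_compat; auto.
    rewrite Rmult_assoc, Rinv_r, Rmult_1_r by lra. auto. }
  assert (Hwt : wgt M t * K = t / (M - 2)).
  { unfold K, wgt. rewrite rpow_pos by lra. unfold Rdiv. rewrite <- Rmult_assoc.
    rewrite <- Rpower_plus. replace (M - 1 + (2 - M)) with 1 by ring. rewrite Rpower_1 by lra. auto. }
  eapply Rle_trans. apply Rmult_le_compat_l. apply wgt_ge0. exact HV2.
  replace (wgt M t * (E * K)) with (E * (wgt M t * K)) by ring. rewrite Hwt.
  unfold Rdiv. rewrite <- Rmult_assoc. rewrite <- (Rmult_1_r E) at 2.
  apply Rmult_le_compat_r. left; apply Rinv_0_lt_compat; lra.
  apply Rmult_le_compat_l; lra.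
Qed.

Lemma zone_claim3 M p m V tz i : zhyp M p m V tz i ->
  M - 2 <= rpow (maxabs V (tz i) (tz (S i))) (p - 1).
Proof.
  intros H. pose proof (zone_bounds _ _ _ _ _ _ H) as Hb.
  pose proof (zone_E1_pos _ _ _ _ _ _ H) as HE1.
  pose proof (zone_max _ _ _ _ _ _ H) as Hmax.
  pose proof (V_bound _ _ _ _ _ _ H) as HVb.
  pose proof (energy _ _ _ _ _ _ H) as Hen.
  rewrite (proj2 (I1_eq _ _ _ _ _ _ H)), (proj2 (I2_eq _ _ _ _ _ _ H)) in Hen.
  destruct H as (HM & Hp & Hr & _).
  set (a := tz i) in *. set (b := tz (S i)) in *.
  set (Mx := maxabs V a b) in *.
  set (W := fun t => wgt M t * modc V (V 0) t ^ 2).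
  assert (HWc : forall t, a <= t <= b -> continuous W t).
  { intros t Ht; unfold W. apply cont_mult. apply cont_wgt; lra. apply cont_sq.
    apply (modc_V_cont M p V Hr); lra. }
  assert (HWex : ex_RInt W a b) by (apply (ex_RInt_cont_sub W a b); auto; lra).
  set (E := RInt (G1c M p V) a b) in *.
  assert (HW : RInt W a b <= E / (M - 2)).
  { eapply Rle_trans. apply RInt_le_const; auto. lra.
    intros t Ht. unfold W. rewrite modc_pos by lra. rewrite <- Hen in HVb. apply HVb. lra.
    rewrite <- (Rmult_1_l (E / (M - 2))) at 2. apply Rmult_le_compat_r.
    apply Rdiv_le_0_compat; lra. lra. }
  assert (HE : E <= rpow Mx (p - 1) * RInt W a b).
  { rewrite <- RInt_scalR by auto. unfold E. apply RInt_le. lra.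
    apply (ex_RInt_cont_sub _ a b); try lra. intros; apply G1c_cont; auto; lra.
    apply ex_RInt_scalR; auto.
    intros t Ht. unfold G1c, W. rewrite !modc_pos by lra.
    rewrite <- rpow_mult_sq.
    assert (rpow (Rabs (V t)) (p - 1) <= rpow Mx (p - 1)).
    { apply rpow_le_base. split. apply Rabs_pos. apply Hmax; lra. lra. }
    assert (0 <= wgt M t) by apply wgt_ge0.
    assert (0 <= V t * V t) by apply Rle_0_sqr.
    replace (wgt M t * (rpow (Rabs (V t)) (p - 1) * V t * V t)) with
      ((wgt M t * (V t * V t)) * rpow (Rabs (V t)) (p - 1)) by ring.
    replace (rpow Mx (p - 1) * (wgt M t * V t ^ 2)) with
      ((wgt M t * (V t * V t)) * rpow Mx (p - 1)) by ring.
    apply Rmult_le_compat_l; auto. apply Rmult_le_pos; auto. }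
  assert (Hr0 : 0 <= rpow Mx (p - 1)) by apply rpow_ge0.
  assert (E <= rpow Mx (p - 1) * (E / (M - 2))).
  { eapply Rle_trans. exact HE. apply Rmult_le_compat_l; auto. }
  apply Rnot_lt_le. intros Hlt.
  assert (HH : rpow Mx (p - 1) * (E / (M - 2)) < (M - 2) * (E / (M - 2))).
  { apply Rmult_lt_compat_r; auto. apply Rdiv_lt_0_compat; lra. }
  assert (HH2 : (M - 2) * (E / (M - 2)) = E).
  { unfold Rdiv. rewrite Rmult_comm, Rmult_assoc, Rinv_l, Rmult_1_r by lra. auto. }
  lra.
Qed.


Definition psi (eps x : R) := if Rle_dec x eps then 0 else (x - eps) ^ 2 / x.
Definition dpsi (eps x : R) := if Rle_dec x eps then 0 else 1 - eps ^ 2 / x ^ 2.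

Lemma psi_deriv eps x : 0 < eps -> is_derive (psi eps) x (dpsi eps x).
Proof.
  intros He. destruct (Rtotal_order x eps) as [H|[H|H]].
  - unfold dpsi. destruct (Rle_dec x eps); [|lra].
    apply is_derive_ext_loc with (fun _ => 0).
    apply locally_interval with m_infty (Finite eps); simpl; auto.
    intros y _ Hy. simpl in Hy. unfold psi. destruct (Rle_dec y eps); lra.
    apply (is_derive_const (K := R_AbsRing) (V := R_NormedModule)).
  - subst eps. unfold dpsi. destruct (Rle_dec x x); [|lra].
    apply is_derive_Reals. intros e He'.
    exists (mkposreal (Rmin (x/2) (e * x / 2)) ltac:(apply Rmin_glb_lt; apply Rdiv_lt_0_compat; try apply Rmult_lt_0_compat; lra)).
    intros h Hh0 Hh. simpl in Hh.
    assert (Hh1 : Rabs h < x / 2) by (eapply Rlt_le_trans; [exact Hh| apply Rmin_l]).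
    assert (Hh2 : Rabs h < e * x / 2) by (eapply Rlt_le_trans; [exact Hh| apply Rmin_r]).
    unfold psi. destruct (Rle_dec x x); [|lra].
    destruct (Rle_dec (x + h) x).
    + replace ((0 - 0) / h - 0) with 0 by (field; auto). rewrite Rabs_R0; lra.
    + assert (h > 0) by lra. rewrite Rabs_pos_eq in Hh1, Hh2 by lra.
      replace (((x + h - x) ^ 2 / (x + h) - 0) / h - 0) with (h / (x + h)) by (field; lra).
      rewrite Rabs_pos_eq by (apply Rdiv_le_0_compat; lra).
      apply Rmult_lt_reg_r with (x + h). lra.
      unfold Rdiv. rewrite Rmult_assoc, Rinv_l, Rmult_1_r by lra. nra.
  - unfold dpsi. destruct (Rle_dec x eps); [lra|].
    apply is_derive_ext_loc with (fun y => (y - eps) ^ 2 / y).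
    apply locally_interval with (Finite eps) p_infty; simpl; auto.
    intros y Hy _. simpl in Hy. unfold psi. destruct (Rle_dec y eps); lra.
    auto_derive. lra. field. lra.
Qed.

Lemma dpsi_cont eps x : 0 < eps -> continuous (dpsi eps) x.
Proof.
  intros He. destruct (Rtotal_order x eps) as [H|[H|H]].
  - apply continuous_ext_loc with (fun _ => 0).
    apply locally_interval with m_infty (Finite eps); simpl; auto.
    intros y _ Hy. simpl in Hy. unfold dpsi. destruct (Rle_dec y eps); lra.
    apply continuous_const.
  - subst eps. apply filterlim_locally. intros e.
    assert (Hc : continuous (fun y => 1 - x ^ 2 / y ^ 2) x).
    { apply (ex_derive_continuous (K := R_AbsRing) (V := R_NormedModule)). auto_derive. rewrite Rmult_1_r; apply Rmult_integral_contrapositive_currified; lra. }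
    apply filterlim_locally with (eps := e) in Hc. destruct Hc as [d Hd].
    exists d. intros y Hy. specialize (Hd y Hy).
    unfold dpsi. destruct (Rle_dec x x); [|lra]. destruct (Rle_dec y x).
    apply ball_center.
    replace (1 - x ^ 2 / x ^ 2) with 0 in Hd by (field; lra). auto.
  - apply continuous_ext_loc with (fun y => 1 - eps ^ 2 / y ^ 2).
    apply locally_interval with (Finite eps) p_infty; simpl; auto.
    intros y Hy _. simpl in Hy. unfold dpsi. destruct (Rle_dec y eps). lra. reflexivity.
    apply (ex_derive_continuous (K := R_AbsRing) (V := R_NormedModule)). auto_derive. rewrite Rmult_1_r; apply Rmult_integral_contrapositive_currified; lra.
Qed.

Lemma psi_small eps x : x <= eps -> psi eps x = 0.
Proof. intros; unfold psi; destruct (Rle_dec x eps); lra. Qed.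
Lemma dpsi_small eps x : x <= eps -> dpsi eps x = 0.
Proof. intros; unfold dpsi; destruct (Rle_dec x eps); lra. Qed.

Lemma psi_bounds eps x : 0 < eps -> 0 <= x ->
  0 <= psi eps x /\ psi eps x <= x /\ x - 2 * eps <= psi eps x.
Proof.
  intros He Hx. unfold psi. destruct (Rle_dec x eps). lra.
  assert (0 < x) by lra.
  assert (E : (x - eps) ^ 2 / x = x - 2 * eps + eps ^ 2 / x) by (field; lra).
  assert (0 <= (x - eps) ^ 2 / x) by (apply Rdiv_le_0_compat; [apply pow2_ge_0|lra]). rewrite E in *. assert (0 < eps ^ 2 / x) by (apply Rdiv_lt_0_compat; nra).
  assert (eps ^ 2 / x <= eps).
  { apply Rmult_le_reg_r with x; auto. unfold Rdiv. rewrite Rmult_assoc, Rinv_l by lra. nra. }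
  lra.
Qed.

Lemma dpsi_bounds eps x : 0 < eps -> 0 <= dpsi eps x <= 1.
Proof.
  intros He. unfold dpsi. destruct (Rle_dec x eps). lra.
  assert (0 < eps ^ 2 / x ^ 2) by (apply Rdiv_lt_0_compat; nra).
  assert (eps ^ 2 / x ^ 2 <= 1).
  { apply Rmult_le_reg_r with (x ^ 2). nra. unfold Rdiv. rewrite Rmult_assoc, Rinv_l by nra. nra. }
  lra.
Qed.

Definition Psi eps s := psi eps s + psi eps (- s).
Definition dPsi eps s := dpsi eps s - dpsi eps (- s).

Lemma Psi_deriv eps s : 0 < eps -> is_derive (Psi eps) s (dPsi eps s).
Proof.
  intros He. unfold Psi, dPsi.
  apply (is_derive_plus (K := R_AbsRing) (V := R_NormedModule)). apply psi_deriv; auto.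
  replace (- dpsi eps (- s)) with (scal (-1) (dpsi eps (- s))) by (unfold scal; simpl; unfold mult; simpl; ring).
  apply (is_derive_comp (psi eps) (fun y => - y)). apply psi_deriv; auto.
  apply (is_derive_opp (K := R_AbsRing) (V := R_NormedModule) (fun y => y)).
  apply (is_derive_id (K := R_AbsRing)).
Qed.

Lemma Psi_cont eps s : 0 < eps -> continuous (Psi eps) s.
Proof. intros He. apply (ex_derive_continuous (K := R_AbsRing) (V := R_NormedModule)).
  eexists. apply Psi_deriv; auto. Qed.

Lemma dPsi_cont eps s : 0 < eps -> continuous (dPsi eps) s.
Proof.
  intros He. unfold dPsi. apply cont_minus. apply dpsi_cont; auto.
  apply (cont_comp (fun y => - y) (dpsi eps)). apply cont_opp. apply continuous_id.
  apply dpsi_cont; auto.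
Qed.

Lemma Psi_abs eps s : 0 < eps -> Psi eps s = psi eps (Rabs s).
Proof.
  intros He. unfold Psi. destruct (Rle_dec 0 s).
  rewrite Rabs_pos_eq by lra. rewrite (psi_small eps (-s)) by lra. ring.
  rewrite Rabs_left by lra. rewrite (psi_small eps s) by lra. ring.
Qed.

Lemma dPsi_bound eps s : 0 < eps -> Rabs (dPsi eps s) <= 1.
Proof.
  intros He. unfold dPsi. destruct (Rle_dec 0 s).
  rewrite (dpsi_small eps (-s)) by lra. pose proof (dpsi_bounds eps s He).
  rewrite Rabs_pos_eq; lra.
  rewrite (dpsi_small eps s) by lra. pose proof (dpsi_bounds eps (-s) He).
  rewrite Rabs_left1; lra.
Qed.

Lemma Psi_small eps s : 0 < eps -> Rabs s <= eps -> Psi eps s = 0 /\ dPsi eps s = 0.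
Proof.
  intros He Hs. apply Rabs_le_between in Hs. unfold Psi, dPsi.
  rewrite !psi_small, !dpsi_small by lra. split; ring.
Qed.


Lemma imp_int (M : R) (K : R -> R) L : 1 < M ->
  (forall t, 0 < t <= 1 -> continuous K t) -> filterlim K (at_right 0) (locally L) ->
  ex_RInt (fun t => wgt M t * K t) 0 1 /\
  wint_ex M K /\ wint M K = RInt (fun t => wgt M t * K t) 0 1.
Proof.
  intros HM Hc Hl.
  set (g := fun t => wgt M t * modc K L t).
  assert (Hg : forall t, t <= 1 -> continuous g t).
  { intros t Ht. unfold g. apply cont_mult. apply cont_wgt; auto. apply modc_cont; auto. }
  destruct (RInt_cont_eq (fun t => wgt M t * K t) g 0 1) as [Hex Heq]. lra.
  intros; apply Hg; lra. intros t Ht. unfold g. rewrite modc_pos by lra. auto.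
  set (If := fun z => RInt g z 1).
  assert (HIf : continuous If 0).
  { apply (continuous_RInt_2 (V := R_NormedModule) g 0 1 If).
    apply locally_interval with (Finite (-1)) (Finite 1); simpl; try lra.
    intros z Hz1 Hz2. unfold If. apply (RInt_correct (V := R_CompleteNormedModule)).
    apply (ex_RInt_cont_sub g z 1); try lra. intros; apply Hg; lra. }
  assert (Hgen : is_RInt_gen (fun t => wgt M t * K t) (at_right 0) (at_point 1) (If 0)).
  { intros P [eps HP].
    apply filterlim_locally with (eps := eps) in HIf. destruct HIf as [d Hd].
    apply Filter_prod with (fun x => 0 < x < Rmin d 1) (fun y => y = 1).
    - assert (Hm : 0 < Rmin d 1) by (apply Rmin_glb_lt; [apply cond_pos|lra]).
      exists (mkposreal _ Hm). intros x Hx Hx0. split; auto.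
      apply ballR in Hx. apply Rabs_def2 in Hx. change (pos (mkposreal _ Hm)) with (Rmin d 1) in Hx. unfold minus, plus, opp in Hx; simpl in Hx. lra.
    - reflexivity.
    - intros x y Hx ->. assert (Rmin d 1 <= 1) by apply Rmin_r. exists (If x). split.
      + simpl. apply (is_RInt_ext (V := R_NormedModule) g).
        intros t Ht. rewrite Rmin_left, Rmax_right in Ht by lra. unfold g. rewrite modc_pos by lra. auto.
        unfold If. apply (RInt_correct (V := R_CompleteNormedModule)).
        apply (ex_RInt_cont_sub g x 1); try lra. intros; apply Hg; lra.
      + apply HP. apply Hd. apply ballR. apply Rabs_def1;
        assert (Rmin d 1 <= d) by apply Rmin_l; lra. }
  split; auto. split. exists (If 0); auto.
  unfold wint. rewrite (is_RInt_gen_unique _ _ Hgen). unfold If. auto.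
Qed.


Definition uf (a b : R) (V : R -> R) eps t :=
  if Rlt_dec a t then if Rlt_dec t b then Psi eps (V t) else 0 else 0.
Definition duf (a b : R) (V : R -> R) eps t :=
  if Rlt_dec a t then if Rlt_dec t b then dPsi eps (V t) * Derive V t else 0 else 0.

Lemma uf_in a b V eps t : a < t < b -> uf a b V eps t = Psi eps (V t) /\
  duf a b V eps t = dPsi eps (V t) * Derive V t.
Proof. intros H; unfold uf, duf; destruct (Rlt_dec a t); destruct (Rlt_dec t b); try lra; auto. Qed.
Lemma uf_out a b V eps t : ~ (a < t < b) -> uf a b V eps t = 0 /\ duf a b V eps t = 0.
Proof. intros H; unfold uf, duf; destruct (Rlt_dec a t); destruct (Rlt_dec t b); try lra; auto. Qed.

Lemma u_local M p m V tz i eps : zhyp M p m V tz i -> 0 < eps ->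
  forall t, 0 < t <= 1 ->
  (tz i < t < tz (S i)) \/
  locally t (fun y => uf (tz i) (tz (S i)) V eps y = 0 /\ duf (tz i) (tz (S i)) V eps y = 0).
Proof.
  intros H He t Ht. pose proof (zone_bounds _ _ _ _ _ _ H) as Hb.
  pose proof (zone_Va _ _ _ _ _ _ H) as Ha. pose proof (zone_Vb _ _ _ _ _ _ H) as HVb.
  destruct H as (HM & Hp & Hr & _).
  set (a := tz i) in *. set (b := tz (S i)) in *.
  assert (Hzero : forall c, 0 < c <= 1 -> V c = 0 ->
     locally c (fun y => uf a b V eps y = 0 /\ duf a b V eps y = 0)).
  { intros c Hc HVc. destruct (cont_eps V c eps (V_cont M p V Hr c Hc) He) as [d [Hd Hd2]].
    exists (mkposreal d Hd). intros y Hy. apply ballR in Hy.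
    destruct (Rlt_dec a y); destruct (Rlt_dec y b).
    - destruct (uf_in a b V eps y) as [-> ->]; auto.
      assert (Rabs (V y) <= eps). { specialize (Hd2 y Hy). rewrite HVc, Rminus_0_r in Hd2. lra. }
      destruct (Psi_small eps (V y) He H) as [-> ->]. split; ring.
    - apply uf_out; lra.
    - apply uf_out; lra.
    - apply uf_out; lra. }
  destruct (Rtotal_order t a) as [H1|[H1|H1]].
  - right. apply locally_interval with m_infty (Finite a); simpl; auto.
    intros y _ Hy. apply uf_out; lra.
  - right. destruct Ha as [Ha|[Ha0 Ha]]. lra. rewrite H1. apply Hzero; auto. lra.
  - destruct (Rtotal_order t b) as [H2|[H2|H2]].
    + left; lra.
    + right. rewrite H2. apply Hzero; auto. lra.
    + right. apply locally_interval with (Finite b) p_infty; simpl; auto.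
      intros y Hy _. apply uf_out; lra.
Qed.

Lemma u_deriv M p m V tz i eps : zhyp M p m V tz i -> 0 < eps ->
  forall t, 0 < t <= 1 ->
  is_derive (uf (tz i) (tz (S i)) V eps) t (duf (tz i) (tz (S i)) V eps t).
Proof.
  intros H He t Ht. pose proof (zone_bounds _ _ _ _ _ _ H) as Hb.
  destruct (u_local _ _ _ _ _ _ eps H He t Ht) as [Hin|Hz].
  - destruct H as (HM & Hp & Hr & _). pose proof Hr as [[_ [Hd _]] _].
    apply is_derive_ext_loc with (fun y => Psi eps (V y)).
    apply locally_interval with (Finite (tz i)) (Finite (tz (S i))); simpl; try lra.
    intros y Hy1 Hy2. symmetry. apply uf_in; lra.
    destruct (uf_in (tz i) (tz (S i)) V eps t Hin) as [_ ->].
    replace (dPsi eps (V t) * Derive V t) with (scal (Derive V t) (dPsi eps (V t)))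
      by (unfold scal; simpl; unfold mult; simpl; ring).
    apply (is_derive_comp (Psi eps) V). apply Psi_deriv; auto.
    apply Derive_correct. apply Hd; lra.
  - apply is_derive_ext_loc with (fun _ => 0).
    destruct Hz as [d Hd]. exists d. intros y Hy. symmetry; apply Hd; auto.
    destruct Hz as [d Hd]. rewrite (proj2 (Hd t (ball_center t d))).
    apply (is_derive_const (K := R_AbsRing) (V := R_NormedModule)).
Qed.

Lemma Derive_u_loc M p m V tz i eps : zhyp M p m V tz i -> 0 < eps ->
  forall t, 0 < t <= 1 ->
  locally t (fun y => Derive (uf (tz i) (tz (S i)) V eps) y = duf (tz i) (tz (S i)) V eps y).
Proof.
  intros H He t Ht. pose proof (zone_bounds _ _ _ _ _ _ H) as Hb.
  destruct (u_local _ _ _ _ _ _ eps H He t Ht) as [Hin|Hz].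
  - apply locally_interval with (Finite (tz i)) (Finite (tz (S i))); simpl; try lra.
    intros y Hy1 Hy2. apply is_derive_unique. apply (u_deriv _ _ _ _ _ _ eps H He). lra.
  - apply locally_locally in Hz. destruct Hz as [d Hd]. exists d. intros y Hy.
    specialize (Hd y Hy).
    rewrite (Derive_ext_loc _ (fun _ => 0)).
    rewrite Derive_const. destruct Hd as [d' Hd']. rewrite (proj2 (Hd' y (ball_center y d'))). auto.
    destruct Hd as [d' Hd']. exists d'. intros z Hz. apply Hd'; auto.
Qed.

Lemma du_cont M p m V tz i eps : zhyp M p m V tz i -> 0 < eps ->
  forall t, 0 < t <= 1 -> continuous (duf (tz i) (tz (S i)) V eps) t.
Proof.
  intros H He t Ht. pose proof (zone_bounds _ _ _ _ _ _ H) as Hb.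
  destruct (u_local _ _ _ _ _ _ eps H He t Ht) as [Hin|Hz].
  - destruct H as (HM & Hp & Hr & _).
    apply continuous_ext_loc with (fun y => dPsi eps (V y) * Derive V y).
    apply locally_interval with (Finite (tz i)) (Finite (tz (S i))); simpl; try lra.
    intros y Hy1 Hy2. symmetry. apply uf_in; lra.
    apply cont_mult. apply (cont_comp V (dPsi eps)). apply (V_cont M p V Hr); lra.
    apply dPsi_cont; auto. apply (V'_cont M p V Hr); lra.
  - apply continuous_ext_loc with (fun _ => 0).
    destruct Hz as [d Hd]. exists d. intros y Hy. symmetry; apply Hd; auto.
    apply continuous_const.
Qed.

Lemma u_cont M p m V tz i eps : zhyp M p m V tz i -> 0 < eps ->
  forall t, 0 < t <= 1 -> continuous (uf (tz i) (tz (S i)) V eps) t.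
Proof.
  intros H He t Ht. apply (ex_derive_continuous (K := R_AbsRing) (V := R_NormedModule)).
  eexists. apply (u_deriv _ _ _ _ _ _ eps H He t Ht).
Qed.

Lemma Du_cont M p m V tz i eps : zhyp M p m V tz i -> 0 < eps ->
  forall t, 0 < t <= 1 -> continuous (Derive (uf (tz i) (tz (S i)) V eps)) t.
Proof.
  intros H He t Ht. apply continuous_ext_loc with (duf (tz i) (tz (S i)) V eps).
  destruct (Derive_u_loc _ _ _ _ _ _ eps H He t Ht) as [d Hd]. exists d. intros y Hy.
  symmetry; apply Hd; auto.
  apply (du_cont _ _ _ _ _ _ eps H He t Ht).
Qed.


Lemma rl_of_cont (f h : R -> R) d : 0 < d -> (forall t, 0 < t < d -> f t = h t) ->
  continuous h 0 -> filterlim f (at_right 0) (locally (h 0)).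
Proof.
  intros Hd Hfh Hc. apply filterlim_locally. intros eps.
  apply filterlim_locally with (eps := eps) in Hc. destruct Hc as [e He].
  assert (Hm : 0 < Rmin e d) by (apply Rmin_glb_lt; [apply cond_pos|lra]).
  exists (mkposreal _ Hm). intros y Hy Hy0.
  apply ballR in Hy. change (pos (mkposreal _ Hm)) with (Rmin e d) in Hy.
  apply Rabs_def2 in Hy. unfold minus, plus, opp in Hy; simpl in Hy.
  assert (Rmin e d <= e) by apply Rmin_l. assert (Rmin e d <= d) by apply Rmin_r.
  rewrite Hfh by lra. apply He. apply ballR. apply Rabs_def1; unfold minus, plus, opp; simpl; lra.
Qed.

Lemma u_near0 M p m V tz i eps : zhyp M p m V tz i -> 0 < eps ->
  exists d, 0 < d /\ exists hu hdu : R -> R, continuous hu 0 /\ continuous hdu 0 /\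
  forall t, 0 < t < d -> uf (tz i) (tz (S i)) V eps t = hu t /\
                         duf (tz i) (tz (S i)) V eps t = hdu t.
Proof.
  intros H He. pose proof (zone_bounds _ _ _ _ _ _ H) as Hb.
  pose proof (zone_Va _ _ _ _ _ _ H) as Ha.
  destruct H as (HM & Hp & Hr & _).
  destruct Ha as [Ha|[Ha0 Ha]].
  - exists (tz (S i)). split. lra.
    exists (fun t => Psi eps (modc V (V 0) t)).
    exists (fun t => dPsi eps (modc V (V 0) t) * modc (Derive V) 0 t).
    split. apply (cont_comp (modc V (V 0)) (Psi eps)). apply (modc_V_cont M p V Hr); lra.
    apply Psi_cont; auto.
    split. apply cont_mult. apply (cont_comp (modc V (V 0)) (dPsi eps)). apply (modc_V_cont M p V Hr); lra.
    apply dPsi_cont; auto. apply (modc_V'_cont M p V Hr); lra.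
    intros t Ht. rewrite !modc_pos by lra. apply uf_in; lra.
  - exists (tz i). split; auto. exists (fun _ => 0), (fun _ => 0).
    split. apply continuous_const. split. apply continuous_const.
    intros t Ht. apply uf_out; lra.
Qed.

Lemma zero_outside (f : R -> R) a b : 0 <= a -> a < b -> b <= 1 -> ex_RInt f 0 1 ->
  (forall t, 0 < t < a -> f t = 0) -> (forall t, b < t < 1 -> f t = 0) ->
  RInt f 0 1 = RInt f a b.
Proof.
  intros H0 Hab H1 Hex Hl Hr.
  assert (E0a : ex_RInt f 0 a) by (apply (ex_RInt_Chasles_1 f 0 a 1); auto; lra).
  assert (Ea1 : ex_RInt f a 1) by (apply (ex_RInt_Chasles_2 f 0 a 1); auto; lra).
  assert (Eab : ex_RInt f a b) by (apply (ex_RInt_Chasles_1 f a b 1); auto; lra).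
  assert (Eb1 : ex_RInt f b 1) by (apply (ex_RInt_Chasles_2 f a b 1); auto; lra).
  rewrite <- (RInt_chaslesR f 0 a 1), <- (RInt_chaslesR f a b 1) by auto.
  rewrite (RInt_ext f (fun _ => 0) 0 a), (RInt_ext f (fun _ => 0) b 1).
  rewrite !RInt_constR. lra.
  intros x Hx. rewrite Rmin_left, Rmax_right in Hx by lra. apply Hr; lra.
  intros x Hx. rewrite Rmin_left, Rmax_right in Hx by lra. apply Hl; lra.
Qed.

Lemma wint_zone M p m V tz i eps (K : R -> R) (k : R -> R) : zhyp M p m V tz i -> 0 < eps ->
  (forall t, 0 < t <= 1 -> continuous K t) ->
  (exists h : R -> R, continuous h 0 /\ exists d, 0 < d /\ forall t, 0 < t < d -> K t = h t) ->
  (forall t, 0 < t < tz i -> K t = 0) -> (forall t, tz (S i) < t < 1 -> K t = 0) ->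
  (forall t, tz i < t < tz (S i) -> K t = k t) ->
  wint_ex M K /\ wint M K = RInt (fun t => wgt M t * k t) (tz i) (tz (S i)).
Proof.
  intros H He Hc [h [Hh [d [Hd Hkh]]]] Hl Hr Hin.
  pose proof (zone_bounds _ _ _ _ _ _ H) as Hb. destruct H as (HM & _).
  destruct (imp_int M K (h 0)) as [Hex [Hw Hw2]]; auto. lra.
  apply (rl_of_cont K h d); auto.
  split; auto. rewrite Hw2. rewrite (zero_outside _ (tz i) (tz (S i))); try lra; auto.
  apply RInt_ext. intros x Hx. rewrite Rmin_left, Rmax_right in Hx by lra. rewrite Hin; auto.
  intros t Ht. rewrite Hl; auto; ring.
  intros t Ht. rewrite Hr; auto; ring.
Qed.


Lemma Derive_u_eq M p m V tz i eps : zhyp M p m V tz i -> 0 < eps ->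
  forall t, 0 < t <= 1 -> Derive (uf (tz i) (tz (S i)) V eps) t = duf (tz i) (tz (S i)) V eps t.
Proof.
  intros H He t Ht. destruct (Derive_u_loc _ _ _ _ _ _ eps H He t Ht) as [d Hd].
  apply Hd, ball_center.
Qed.

Lemma u_wint M p m V tz i eps (F : R -> R) : zhyp M p m V tz i -> 0 < eps ->
  (forall x, continuous F x) -> F 0 = 0 ->
  (wint_ex M (fun t => F (uf (tz i) (tz (S i)) V eps t)) /\
   wint M (fun t => F (uf (tz i) (tz (S i)) V eps t)) =
     RInt (fun t => wgt M t * F (Psi eps (V t))) (tz i) (tz (S i))) /\
  (wint_ex M (fun t => F (Derive (uf (tz i) (tz (S i)) V eps) t)) /\
   wint M (fun t => F (Derive (uf (tz i) (tz (S i)) V eps) t)) =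
     RInt (fun t => wgt M t * F (dPsi eps (V t) * Derive V t)) (tz i) (tz (S i))).
Proof.
  intros H He HF HF0. pose proof (zone_bounds _ _ _ _ _ _ H) as Hb.
  destruct (u_near0 _ _ _ _ _ _ eps H He) as [d [Hd [hu [hdu [Hhu [Hhdu Hh]]]]]].
  split.
  - apply (wint_zone M p m V tz i eps); auto.
    + intros t Ht. apply (cont_comp _ F). apply (u_cont _ _ _ _ _ _ eps H He t Ht). apply HF.
    + exists (fun t => F (hu t)). split. apply (cont_comp hu F); auto.
      exists d. split; auto. intros t Ht. rewrite (proj1 (Hh t Ht)). auto.
    + intros t Ht. rewrite (proj1 (uf_out (tz i) (tz (S i)) V eps t ltac:(intros [? ?]; lra))). auto.
    + intros t Ht. rewrite (proj1 (uf_out (tz i) (tz (S i)) V eps t ltac:(intros [? ?]; lra))). auto.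
    + intros t Ht. rewrite (proj1 (uf_in _ _ V eps t Ht)). auto.
  - apply (wint_zone M p m V tz i eps); auto.
    + intros t Ht. apply (cont_comp _ F). apply (Du_cont _ _ _ _ _ _ eps H He t Ht). apply HF.
    + exists (fun t => F (hdu t)). split. apply (cont_comp hdu F); auto.
      exists (Rmin d 1). split. apply Rmin_glb_lt; lra. intros t Ht.
      assert (Rmin d 1 <= d) by apply Rmin_l. assert (Rmin d 1 <= 1) by apply Rmin_r.
      rewrite (Derive_u_eq _ _ _ _ _ _ eps H He t) by lra. rewrite (proj2 (Hh t ltac:(lra))). auto.
    + intros t Ht. rewrite (Derive_u_eq _ _ _ _ _ _ eps H He t) by lra.
      rewrite (proj2 (uf_out (tz i) (tz (S i)) V eps t ltac:(intros [? ?]; lra))). auto.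
    + intros t Ht. rewrite (Derive_u_eq _ _ _ _ _ _ eps H He t) by lra.
      rewrite (proj2 (uf_out (tz i) (tz (S i)) V eps t ltac:(intros [? ?]; lra))). auto.
    + intros t Ht. rewrite (Derive_u_eq _ _ _ _ _ _ eps H He t) by lra.
      rewrite (proj2 (uf_in _ _ V eps t Ht)). auto.
Qed.

Lemma u_H10M M p m V tz i eps : zhyp M p m V tz i -> 0 < eps ->
  H10M M (uf (tz i) (tz (S i)) V eps).
Proof.
  intros H He. pose proof (zone_bounds _ _ _ _ _ _ H) as Hb.
  assert (HF : forall x, continuous (fun y : R => y ^ 2) x) by (intros; apply cont_sq, continuous_id).
  destruct (u_wint M p m V tz i eps (fun y => y ^ 2) H He HF ltac:(simpl; ring)) as [[A1 _] [A2 _]].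
  split. apply uf_out; lra.
  split. intros t Ht. split. eexists. apply (u_deriv _ _ _ _ _ _ eps H He t Ht).
  apply (Du_cont _ _ _ _ _ _ eps H He t Ht).
  split; auto.
Qed.


Lemma S_M_le M (u : R -> R) : 0 < S_M M -> H10M M u -> (exists t, 0 < t < 1 /\ u t <> 0) ->
  wint_ex M (fun t => rpow (Rabs (u t)) (2 * M / (M - 2))) ->
  S_M M <= wint M (fun t => Derive u t ^ 2) /
          rpow (wint M (fun t => rpow (Rabs (u t)) (2 * M / (M - 2)))) ((M - 2) / M).
Proof.
  intros HS Hu Hnz Hq. unfold S_M in *.
  set (P := fun y : Rbar => exists v : R -> R, H10M M v /\ (exists t, 0 < t < 1 /\ v t <> 0) /\
     wint_ex M (fun t => rpow (Rabs (v t)) (2 * M / (M - 2))) /\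
     y = Finite (wint M (fun t => Derive v t ^ 2) /
          rpow (wint M (fun t => rpow (Rabs (v t)) (2 * M / (M - 2)))) ((M - 2) / M))) in *.
  destruct (glb_correct P) as [Hlb _].
  assert (HP : P (Finite (wint M (fun t => Derive u t ^ 2) /
          rpow (wint M (fun t => rpow (Rabs (u t)) (2 * M / (M - 2)))) ((M - 2) / M)))).
  { exists u. auto. }
  specialize (Hlb _ HP).
  destruct (Rbar_glb P) as [s| |]; simpl in *; auto; lra.
Qed.

Lemma Rpower_base1 y : Rpower 1 y = 1.
Proof. unfold Rpower. rewrite ln_1, Rmult_0_r. apply exp_0. Qed.

Lemma amgm_pow th x : 0 < th < 1 -> 0 <= x -> rpow x th <= th * x + (1 - th).
Proof.
  intros Hth Hx. destruct (Req_dec x 0) as [->|Hx0].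
  rewrite rpow_le0 by lra. lra.
  rewrite rpow_pos by lra. assert (Hxp : 0 < x) by lra.
  set (h := fun y => Rpower y th - th * y).
  set (dh := fun y => th * Rpower y (th - 1) - th).
  destruct (MVT_gen h 1 x dh) as [c [Hc Hmvt]].
  - intros y Hy. assert (0 < y). { destruct (Rle_dec 1 x).
      rewrite Rmin_left in Hy by lra. lra. rewrite Rmin_right in Hy by lra. lra. }
    assert (D1 : is_derive (fun z => Rpower z th) y (th * Rpower y (th - 1))).
    { apply is_derive_Reals. apply derivable_pt_lim_power; auto. }
    assert (D2 : is_derive (fun z => th * z) y (th * 1)).
    { apply (is_derive_scal (fun z => z) y th 1). apply (is_derive_id (K := R_AbsRing)). }
    pose proof (is_derive_minus _ _ _ _ _ D1 D2) as D3.
    unfold h, dh. replace (th * Rpower y (th - 1) - th) with (minus (th * Rpower y (th - 1)) (th * 1)).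
    apply D3. unfold minus, plus, opp; simpl; ring.
  - intros y Hy. assert (0 < y). { destruct (Rle_dec 1 x).
      rewrite Rmin_left in Hy by lra. lra. rewrite Rmin_right in Hy by lra. lra. }
    apply continuity_pt_filterlim. apply (cont_minus (fun z => Rpower z th) (fun z => th * z)). apply cont_Rpower; auto.
    apply (cont_mult (fun _ => th) (fun z => z)). apply continuous_const. apply continuous_id.
  - unfold h in Hmvt. rewrite Rpower_base1 in Hmvt.
    assert (dh c * (x - 1) <= 0).
    { unfold dh. destruct (Rle_dec 1 x).
      + rewrite Rmin_left, Rmax_right in Hc by lra.
        assert (Rpower c (th - 1) <= Rpower c 0) by (apply Rle_Rpower; lra).
        rewrite Rpower_O in H by lra.
        assert (th * Rpower c (th - 1) - th <= 0) by nra. nra.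
      + rewrite Rmin_right, Rmax_left in Hc by lra.
        assert (Rpower c (1 - th) <= Rpower 1 (1 - th)) by (apply Rle_Rpower_l; lra).
        rewrite Rpower_base1 in H.
        replace (th - 1) with (- (1 - th)) by ring. rewrite Rpower_Ropp.
        assert (1 <= / Rpower c (1 - th)).
        { rewrite <- Rinv_1 at 1. apply Rinv_le_contravar. apply Rpower_pos. auto. }
        assert (th * / Rpower c (1 - th) - th >= 0) by nra. nra. }
    lra.
Qed.

Lemma pow_diff x y K r : 0 <= y <= x -> x <= K -> 1 <= r ->
  rpow x r - rpow y r <= r * rpow K (r - 1) * (x - y).
Proof.
  intros Hxy HK Hr.
  destruct (Req_dec x 0) as [Hx0|Hx0].
  { subst. assert (y = 0) by lra. subst. rewrite rpow_le0 by lra. 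
    assert (0 <= rpow K (r - 1)) by apply rpow_ge0. nra. }
  destruct (Req_dec y 0) as [Hy0|Hy0].
  - subst. rewrite (rpow_le0 0) by lra. rewrite rpow_pos by lra.
    destruct (Req_dec r 1) as [Hr1|Hr1].
    { subst. rewrite Rpower_1 by lra. replace (1 - 1) with 0 by ring.
      rewrite rpow_pos by lra. rewrite Rpower_O by lra. lra. }
    replace r with ((r - 1) + 1) at 1 by ring. rewrite Rpower_plus, Rpower_1 by lra.
    rewrite (rpow_pos K) by lra.
    assert (Rpower x (r - 1) <= Rpower K (r - 1)) by (apply Rle_Rpower_l; lra).
    assert (0 <= Rpower x (r - 1)) by (left; apply Rpower_pos).
    assert (Rpower K (r - 1) * x <= r * Rpower K (r - 1) * x).
    { assert (0 <= Rpower K (r - 1) * x) by nra. nra. }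
    nra.
  - rewrite !rpow_pos by lra.
    destruct (MVT_gen (fun z => Rpower z r) y x (fun z => r * Rpower z (r - 1))) as [c [Hc Hm]].
    + intros z Hz. rewrite Rmin_left, Rmax_right in Hz by lra. apply is_derive_Reals.
      apply derivable_pt_lim_power; lra.
    + intros z Hz. rewrite Rmin_left, Rmax_right in Hz by lra. apply continuity_pt_filterlim.
      apply cont_Rpower; lra.
    + rewrite Rmin_left, Rmax_right in Hc by lra. rewrite Hm.

      assert (Rpower c (r - 1) <= Rpower K (r - 1)) by (apply Rle_Rpower_l; lra).
      apply Rmult_le_compat_r. lra. apply Rmult_le_compat_l; lra.
Qed.


Lemma Rpower_inv A y : 0 < A -> Rpower (/ A) y = / Rpower A y.
Proof. intros HA. unfold Rpower. rewrite ln_Rinv by auto. rewrite <- exp_Ropp. f_equal; ring. Qed.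

Lemma rpow_quot f A r q : 0 <= f -> 0 < A -> 0 < r -> 0 < q ->
  rpow (rpow f q / A) (r / q) = rpow f r / rpow A (r / q).
Proof.
  intros Hf HA Hr Hq. destruct (Req_dec f 0) as [->|Hf0].
  - rewrite !(rpow_le0 0) by lra. unfold Rdiv. rewrite Rmult_0_l. rewrite rpow_le0 by lra. ring.
  - assert (0 < rpow f q) by (rewrite rpow_pos by lra; apply Rpower_pos).
    assert (0 < / A) by (apply Rinv_0_lt_compat; auto).
    rewrite (rpow_pos (rpow f q / A)) by (apply Rdiv_lt_0_compat; auto).
    rewrite !rpow_pos by lra. unfold Rdiv.
    rewrite <- Rpower_mult_distr by (try apply Rpower_pos; auto).
    rewrite Rpower_mult, Rpower_inv by auto. f_equal. f_equal. field. lra.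
Qed.

Lemma holder (w f : R -> R) a b q r : a <= b -> 0 < r < q ->
  ex_RInt w a b -> ex_RInt (fun t => w t * rpow (f t) q) a b ->
  ex_RInt (fun t => w t * rpow (f t) r) a b ->
  (forall t, a < t < b -> 0 <= w t /\ 0 <= f t) -> RInt w a b <= 1 ->
  0 < RInt (fun t => w t * rpow (f t) q) a b ->
  RInt (fun t => w t * rpow (f t) r) a b <= rpow (RInt (fun t => w t * rpow (f t) q) a b) (r / q).
Proof.
  intros Hab Hrq Hw Hq Hr Hpos HW HA.
  set (A := RInt (fun t => w t * rpow (f t) q) a b) in *.
  set (th := r / q).
  assert (Hth : 0 < th < 1).
  { unfold th. split. apply Rdiv_lt_0_compat; lra.
    apply Rmult_lt_reg_r with q. lra. unfold Rdiv. rewrite Rmult_assoc, Rinv_l by lra. lra. }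
  set (RA := rpow A th).
  assert (HRA : 0 < RA) by (unfold RA; rewrite rpow_pos by auto; apply Rpower_pos).
  set (c1 := RA * th / A). set (c2 := RA * (1 - th)).
  assert (Hle : RInt (fun t => w t * rpow (f t) r) a b <=
                RInt (fun t => c1 * (w t * rpow (f t) q) + c2 * w t) a b).
  { apply RInt_le; auto. apply ex_RInt_plusR; apply ex_RInt_scalR; auto.
    intros t Ht. destruct (Hpos t Ht) as [Hwt Hft].
    assert (Hx : 0 <= rpow (f t) q / A) by (apply Rdiv_le_0_compat; [apply rpow_ge0|auto]).
    pose proof (amgm_pow th _ Hth Hx) as Ham.
    unfold th in Ham. rewrite rpow_quot in Ham by lra. fold th in Ham. fold RA in Ham.
    assert (E : rpow (f t) r = RA * (rpow (f t) r / RA)) by (field; lra).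
    rewrite E. unfold c1, c2.
    replace (RA * th / A * (w t * rpow (f t) q) + RA * (1 - th) * w t) with
      (w t * (RA * (th * (rpow (f t) q / A) + (1 - th)))) by (field; lra).
    apply Rmult_le_compat_l; auto. apply Rmult_le_compat_l; lra. }
  rewrite RInt_plusR, !RInt_scalR in Hle by (auto; apply ex_RInt_scalR; auto).
  fold A in Hle. unfold c1, c2 in Hle.
  replace (RA * th / A * A) with (RA * th) in Hle by (field; lra).
  assert (RA * (1 - th) * RInt w a b <= RA * (1 - th)).
  { rewrite <- (Rmult_1_r (RA * (1 - th))) at 2. apply Rmult_le_compat_l; auto.
    apply Rmult_le_pos; lra. }
  fold th. fold RA. nra.
Qed.


Lemma rpow_lt_base x y r : 0 <= x < y -> 0 < r -> rpow x r < rpow y r.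
Proof.
  intros Hxy Hr. destruct (Req_dec x 0) as [->|Hx].
  rewrite (rpow_le0 0) by lra. rewrite rpow_pos by lra. apply Rpower_pos.
  rewrite !rpow_pos by lra. apply Rlt_Rpower_l; lra.
Qed.

Lemma rpow_rpow x a b : 0 <= x -> 0 < a -> rpow (rpow x a) b = rpow x (a * b).
Proof.
  intros Hx Ha. destruct (Req_dec x 0) as [->|Hx0].
  rewrite !(rpow_le0 0) by lra. auto.
  rewrite (rpow_pos x a) by lra. rewrite rpow_pos by apply Rpower_pos.
  rewrite rpow_pos by lra. apply Rpower_mult.
Qed.

Lemma rpow_1 x : 0 <= x -> rpow x 1 = x.
Proof. intros Hx. destruct (Req_dec x 0) as [->|H]. apply rpow_le0; lra.
  rewrite rpow_pos by lra. apply Rpower_1; lra. Qed.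

Lemma rpow_pos_pos x y : 0 < x -> 0 < rpow x y.
Proof. intros; rewrite rpow_pos by auto; apply Rpower_pos. Qed.

Lemma wgt_le1 M t : 1 < M -> t <= 1 -> wgt M t <= 1.
Proof.
  intros HM Ht. unfold wgt. destruct (Rle_dec t 0). rewrite rpow_le0; lra.
  rewrite rpow_pos by lra. rewrite <- (Rpower_base1 (M - 1)) at 2. apply Rle_Rpower_l; lra.
Qed.

Lemma PsiV_int M p m V tz i eps s : zhyp M p m V tz i -> 0 < eps -> 0 < s ->
  (forall t, t <= 1 -> continuous (fun t => wgt M t * rpow (Rabs (Psi eps (modc V (V 0) t))) s) t) /\
  ex_RInt (fun t => wgt M t * rpow (Rabs (Psi eps (V t))) s) (tz i) (tz (S i)) /\
  RInt (fun t => wgt M t * rpow (Rabs (Psi eps (V t))) s) (tz i) (tz (S i)) =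
  RInt (fun t => wgt M t * rpow (Rabs (Psi eps (modc V (V 0) t))) s) (tz i) (tz (S i)).
Proof.
  intros H He Hs. pose proof (zone_bounds _ _ _ _ _ _ H) as Hb.
  destruct H as (HM & Hp & Hr & _).
  assert (Hc : forall t, t <= 1 -> continuous (fun t => wgt M t * rpow (Rabs (Psi eps (modc V (V 0) t))) s) t).
  { intros t Ht. apply cont_mult. apply cont_wgt; lra.
    apply (cont_comp (fun t => Psi eps (modc V (V 0) t)) (fun y => rpow (Rabs y) s)).
    apply (cont_comp (modc V (V 0)) (Psi eps)). apply (modc_V_cont M p V Hr); auto.
    apply Psi_cont; auto. apply cont_rpow_abs; auto. }
  split; auto. apply RInt_cont_eq. lra. intros; apply Hc; lra.
  intros t Ht. rewrite modc_pos by lra. auto.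
Qed.


Lemma test_bound M p m V tz i eps : zhyp M p m V tz i -> p < (M + 2) / (M - 2) ->
  0 < S_M M -> 0 < eps < Rabs (V ((tz i + tz (S i)) / 2)) ->
  0 < RInt (fun t => wgt M t * rpow (Rabs (Psi eps (V t))) (p + 1)) (tz i) (tz (S i)) ->
  S_M M * rpow (RInt (fun t => wgt M t * rpow (Rabs (Psi eps (V t))) (p + 1)) (tz i) (tz (S i)))
     (2 / (p + 1)) <=
  RInt (fun t => wgt M t * rpow (Rabs (V t)) (p + 1)) (tz i) (tz (S i)).
Proof.
  intros H HpM HS He HD. pose proof (zone_bounds _ _ _ _ _ _ H) as Hb.
  pose proof (energy _ _ _ _ _ _ H) as Hen.
  pose proof H as (HM & Hp & Hr & _).
  set (a := tz i) in *. set (b := tz (S i)) in *. set (c0 := (a + b) / 2) in *.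
  set (q := 2 * M / (M - 2)).
  assert (Hq : p + 1 < q).
  { unfold q. replace (2 * M / (M - 2)) with ((M + 2) / (M - 2) + 1) by (field; lra). lra. }
  assert (Hq2 : (M - 2) / M = 2 / q) by (unfold q; field; lra).
  set (u := uf a b V eps).
  assert (HU : H10M M u) by (apply (u_H10M M p m V tz i eps H); lra).
  assert (Hc0 : Psi eps (V c0) > 0).
  { rewrite Psi_abs by lra. unfold psi. destruct (Rle_dec (Rabs (V c0)) eps). lra.
    apply Rdiv_lt_0_compat. assert (0 < Rabs (V c0) - eps) by lra. nra. lra. }
  assert (Hnz : exists t, 0 < t < 1 /\ u t <> 0).
  { exists c0. split. unfold c0; lra. unfold u. rewrite (proj1 (uf_in a b V eps c0 ltac:(unfold c0; lra))). lra. }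
  assert (HF1 : forall x, continuous (fun y => rpow (Rabs y) q) x).
  { intros; apply cont_rpow_abs. unfold q. apply Rdiv_lt_0_compat; lra. }
  assert (HF10 : (fun y => rpow (Rabs y) q) 0 = 0).
  { simpl. rewrite Rabs_R0. apply rpow_le0; lra. }
  destruct (u_wint M p m V tz i eps _ H ltac:(lra) HF1 HF10) as [[Ex1 W1] _].
  assert (HF2 : forall x, continuous (fun y : R => y ^ 2) x) by (intros; apply cont_sq, continuous_id).
  destruct (u_wint M p m V tz i eps _ H ltac:(lra) HF2 ltac:(simpl; ring)) as [_ [_ W2]].
  fold a b u in W1, W2, Ex1.
  set (E := RInt (fun t => wgt M t * rpow (Rabs (V t)) (p + 1)) a b) in *.
  assert (HN : wint M (fun t => Derive u t ^ 2) <= E).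
  { rewrite W2. rewrite Hen. apply RInt_le. lra.
    - apply (RInt_cont_eq _ (fun t => wgt M t * (dPsi eps (modc V (V 0) t) * modc (Derive V) 0 t) ^ 2)).
      lra. intros t Ht. apply cont_mult. apply cont_wgt; lra. apply cont_sq. apply cont_mult.
      apply (cont_comp (modc V (V 0)) (dPsi eps)). apply (modc_V_cont M p V Hr); lra. apply dPsi_cont; lra.
      apply (modc_V'_cont M p V Hr); lra.
      intros t Ht. rewrite !modc_pos by lra. auto.
    - apply (I2_eq M p m V tz i H).
    - intros t Ht. apply Rmult_le_compat_l. apply wgt_ge0.
      pose proof (dPsi_bound eps (V t) ltac:(lra)).
      rewrite Rpow_mult_distr. rewrite <- (Rmult_1_l (Derive V t ^ 2)) at 2.
      apply Rmult_le_compat_r. apply pow2_ge_0.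
      rewrite <- pow2_abs. replace 1 with (1 ^ 2) by ring. apply pow_incr. split; [apply Rabs_pos|auto]. }
  set (Y := RInt (fun t => wgt M t * rpow (Rabs (Psi eps (V t))) q) a b) in *.
  destruct (PsiV_int M p m V tz i eps q H ltac:(lra) ltac:(lra)) as [Cq [Eq Rq]]. fold a b in Cq; fold a b in Eq; fold a b in Rq.
  assert (HY : 0 < Y).
  { unfold Y. rewrite Rq. apply RInt_pos with c0. unfold c0; lra.
    intros t Ht; apply Cq; lra.
    intros t Ht; apply Rmult_le_pos. apply wgt_ge0. apply rpow_ge0.
    rewrite modc_pos by (unfold c0; lra). apply Rmult_lt_0_compat. apply wgt_pos; unfold c0; lra.
    apply rpow_pos_pos. apply Rabs_pos_lt. lra. }
  assert (HSle := S_M_le M u HS HU Hnz Ex1).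
  fold q in HSle. rewrite W1, Hq2 in HSle. fold Y in HSle.
  assert (HRY : 0 < rpow Y (2 / q)) by (apply rpow_pos_pos; auto).
  assert (HSY : S_M M * rpow Y (2 / q) <= E).
  { apply Rle_trans with (wint M (fun t => Derive u t ^ 2)); auto.
    apply Rmult_le_reg_r with (/ rpow Y (2 / q)). apply Rinv_0_lt_compat; auto.
    rewrite Rmult_assoc, Rinv_r, Rmult_1_r by lra. auto. }
  destruct (PsiV_int M p m V tz i eps (p + 1) H ltac:(lra) ltac:(lra)) as [Cr [Er Rr]]. fold a b in Cr; fold a b in Er; fold a b in Rr.
  set (D := RInt (fun t => wgt M t * rpow (Rabs (Psi eps (V t))) (p + 1)) a b) in *.
  assert (Hw : ex_RInt (wgt M) a b).
  { apply (ex_RInt_cont_sub (wgt M) a b); try lra. intros; apply cont_wgt; lra. }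
  assert (HW : RInt (wgt M) a b <= 1).
  { eapply Rle_trans. apply RInt_le_const with (k := 1); auto. lra.
    intros t Ht. apply wgt_le1; lra. lra. }
  assert (HH := holder (wgt M) (fun t => Rabs (Psi eps (V t))) a b q (p + 1) ltac:(lra) ltac:(lra)
      Hw Eq Er (fun t Ht => conj (wgt_ge0 M t) (Rabs_pos _)) HW HY).
  fold D Y in HH.
  assert (HDY : rpow D (2 / (p + 1)) <= rpow Y (2 / q)).
  { replace (2 / q) with ((p + 1) / q * (2 / (p + 1))) by (field; lra).
    rewrite <- rpow_rpow. apply rpow_le_base. split; [lra|exact HH]. apply Rdiv_lt_0_compat; lra.
    lra. apply Rdiv_lt_0_compat; lra. }
  assert (HS0 : 0 <= S_M M) by lra.
  eapply Rle_trans; [|exact HSY]. apply Rmult_le_compat_l; auto.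
Qed.


Lemma D_lower M p m V tz i eps : zhyp M p m V tz i -> 0 < eps ->
  RInt (fun t => wgt M t * rpow (Rabs (V t)) (p + 1)) (tz i) (tz (S i))
   - 2 * (p + 1) * rpow (maxabs V (tz i) (tz (S i))) p * eps <=
  RInt (fun t => wgt M t * rpow (Rabs (Psi eps (V t))) (p + 1)) (tz i) (tz (S i)).
Proof.
  intros H He. pose proof (zone_bounds _ _ _ _ _ _ H) as Hb.
  pose proof (zone_max _ _ _ _ _ _ H) as Hmax.
  pose proof H as (HM & Hp & Hr & _).
  destruct (PsiV_int M p m V tz i eps (p + 1) H He ltac:(lra)) as [_ [Er _]].
  destruct (I1_eq M p m V tz i H) as [E1 _].
  set (a := tz i) in *. set (b := tz (S i)) in *.
  set (K := maxabs V a b) in *.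
  set (C := 2 * (p + 1) * rpow K p * eps).
  assert (HC : 0 <= C) by (unfold C; assert (0 <= rpow K p) by apply rpow_ge0;
    apply Rmult_le_pos; [apply Rmult_le_pos|]; lra).
  assert (Hw : ex_RInt (wgt M) a b).
  { apply (ex_RInt_cont_sub (wgt M) a b); try lra. intros; apply cont_wgt; lra. }
  assert (HW : RInt (wgt M) a b <= 1).
  { eapply Rle_trans. apply RInt_le_const with (k := 1); auto. lra.
    intros t Ht. apply wgt_le1; lra. lra. }
  assert (HW0 : 0 <= RInt (wgt M) a b) by (apply RInt_ge0; auto; lra || (intros; apply wgt_ge0)).
  assert (Hle : RInt (fun t => wgt M t * rpow (Rabs (V t)) (p + 1) + (- C) * wgt M t) a b <=
                RInt (fun t => wgt M t * rpow (Rabs (Psi eps (V t))) (p + 1)) a b).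
  { apply RInt_le; auto. lra. apply ex_RInt_plusR; auto. apply ex_RInt_scalR; auto.
    intros t Ht. set (x := Rabs (V t)). set (y := Rabs (Psi eps (V t))).
    assert (Hy : y = psi eps x).
    { unfold y, x. rewrite Psi_abs by lra. apply Rabs_pos_eq.
      apply (psi_bounds eps (Rabs (V t)) He (Rabs_pos _)). }
    pose proof (psi_bounds eps x He (Rabs_pos _)) as Hpb. rewrite <- Hy in Hpb.
    assert (HxK : x <= K) by (apply Hmax; lra).
    pose proof (pow_diff x y K (p + 1) ltac:(lra) HxK ltac:(lra)) as Hd.
    replace (p + 1 - 1) with p in Hd by ring.
    assert (rpow x (p + 1) - rpow y (p + 1) <= C / 2 * 2).
    { eapply Rle_trans. exact Hd. unfold C.
      assert (0 <= rpow K p) by apply rpow_ge0.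
      replace (2 * (p + 1) * rpow K p * eps / 2 * 2) with ((p + 1) * rpow K p * (2 * eps)) by field.
      apply Rmult_le_compat_l. apply Rmult_le_pos; lra. lra. }
    assert (0 <= wgt M t) by apply wgt_ge0.
    assert (wgt M t <= 1) by (apply wgt_le1; lra).
    nra. }
  rewrite RInt_plusR, RInt_scalR in Hle; auto. 2: apply ex_RInt_scalR; auto.
  nra.
Qed.

Lemma per_p M p m V tz i : zhyp M p m V tz i -> p < (M + 2) / (M - 2) -> 0 < S_M M ->
  rpow (S_M M) ((p + 1) / (p - 1)) <=
  RInt (fun t => wgt M t * rpow (Rabs (V t)) (p + 1)) (tz i) (tz (S i)).
Proof.
  intros H HpM HS. pose proof (zone_bounds _ _ _ _ _ _ H) as Hb.
  pose proof (zone_E1_pos _ _ _ _ _ _ H) as HE.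
  rewrite <- (proj2 (I1_eq _ _ _ _ _ _ H)) in HE.
  pose proof (zone_nz _ _ _ _ _ _ H) as Hnz.
  pose proof H as (HM & Hp & Hr & _).
  set (a := tz i) in *. set (b := tz (S i)) in *.
  set (E := RInt (fun t => wgt M t * rpow (Rabs (V t)) (p + 1)) a b) in *.
  set (SM := S_M M) in *. set (r := p + 1).
  assert (Hr2 : 2 < r) by (unfold r; lra).
  assert (HA : SM * rpow E (2 / r) <= E).
  { apply Rnot_lt_le. intros Hlt.
    set (T := E / SM).
    assert (HT0 : 0 < T) by (apply Rdiv_lt_0_compat; auto).
    assert (HT : T < rpow E (2 / r)).
    { unfold T. apply Rmult_lt_reg_l with SM; auto. unfold Rdiv.
      rewrite <- Rmult_assoc, (Rmult_comm SM E), Rmult_assoc, Rinv_r, Rmult_1_r by lra. lra. }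
    set (T' := rpow T (r / 2)).
    assert (HT'0 : 0 < T') by (apply rpow_pos_pos; auto).
    assert (HT' : T' < E).
    { unfold T'. replace E with (rpow (rpow E (2 / r)) (r / 2)).
      apply rpow_lt_base. lra. lra.
      rewrite rpow_rpow by (try apply Rdiv_lt_0_compat; lra). replace (2 / r * (r / 2)) with 1 by (field; lra).
      apply rpow_1; lra. }
    set (c0 := (a + b) / 2).
    assert (Heta : 0 < Rabs (V c0)) by (apply Rabs_pos_lt, Hnz; unfold c0; lra).
    set (C0 := 2 * (p + 1) * rpow (maxabs V a b) p).
    assert (HC0 : 0 <= C0) by (unfold C0; assert (0 <= rpow (maxabs V a b) p) by apply rpow_ge0;
      apply Rmult_le_pos; lra).
    set (eps := Rmin (Rabs (V c0) / 2) ((E - T') / (2 * (C0 + 1)))).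
    assert (He0 : 0 < eps) by (unfold eps; apply Rmin_glb_lt; [lra| apply Rdiv_lt_0_compat; lra]).
    assert (He1 : eps <= Rabs (V c0) / 2) by apply Rmin_l.
    assert (He2 : eps <= (E - T') / (2 * (C0 + 1))) by apply Rmin_r.
    assert (HC0e : C0 * eps < E - T').
    { apply Rle_lt_trans with (C0 * ((E - T') / (2 * (C0 + 1)))).
      apply Rmult_le_compat_l; auto.
      apply Rmult_lt_reg_r with (2 * (C0 + 1)). lra.
      replace (C0 * ((E - T') / (2 * (C0 + 1))) * (2 * (C0 + 1))) with (C0 * (E - T')) by (field; lra).
      nra. }
    pose proof (D_lower M p m V tz i eps H He0) as HDl. fold a b E in HDl.
    set (D := RInt (fun t => wgt M t * rpow (Rabs (Psi eps (V t))) (p + 1)) a b) in *.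
    assert (HD : T' < D) by (unfold C0 in HC0e; lra).
    pose proof (test_bound M p m V tz i eps H HpM HS ltac:(fold a b c0; lra) ltac:(fold a b D; lra)) as Htb.
    fold a b D E SM in Htb. fold r in Htb.
    assert (HDT : T < rpow D (2 / r)).
    { replace T with (rpow T' (2 / r)). apply rpow_lt_base. lra. apply Rdiv_lt_0_compat; lra.
      unfold T'. rewrite rpow_rpow by (try apply Rdiv_lt_0_compat; lra).
      replace (r / 2 * (2 / r)) with 1 by (field; lra). apply rpow_1; lra. }
    assert (SM * T < SM * rpow D (2 / r)) by (apply Rmult_lt_compat_l; auto).
    assert (SM * T = E) by (unfold T; field; lra). lra. }
  assert (HEr : 0 < rpow E (2 / r)) by (apply rpow_pos_pos; auto).
  assert (HS1 : SM <= rpow E ((r - 2) / r)).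
  { apply Rmult_le_reg_r with (rpow E (2 / r)); auto.
    rewrite !rpow_pos by auto. rewrite <- Rpower_plus.
    replace ((r - 2) / r + 2 / r) with 1 by (field; lra). rewrite Rpower_1 by auto.
    rewrite rpow_pos in HA by auto. auto. }
  replace (p - 1) with (r - 2) by (unfold r; ring).
  eapply Rle_trans. apply rpow_le_base. split. lra. exact HS1. apply Rdiv_lt_0_compat; lra.
  rewrite rpow_rpow. replace ((r - 2) / r * (r / (r - 2))) with 1 by (field; lra). rewrite rpow_1; lra.
  lra. apply Rdiv_lt_0_compat; lra.
Qed.


Lemma exp_le x y : x <= y -> exp x <= exp y.
Proof. intros H. destruct (Rle_lt_or_eq_dec _ _ H). left; apply exp_increasing; auto. right; subst; auto. Qed.

Lemma max_lower x p k M : 2 < M -> 0 < k < p - 1 -> 0 <= x -> M - 2 <= rpow x (p - 1) ->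
  Rmin 1 (Rpower (M - 2) (/ k)) <= x.
Proof.
  intros HM Hk Hx Hr. destruct (Rle_dec 1 x). eapply Rle_trans. apply Rmin_l. auto.
  eapply Rle_trans. apply Rmin_r.
  destruct (Req_dec x 0) as [->|Hx0]. rewrite rpow_le0 in Hr; lra.
  rewrite rpow_pos in Hr by lra.
  assert (Hln : ln x < 0) by (rewrite <- ln_1; apply ln_increasing; lra).
  assert (Hlt : Rpower x (p - 1) <= Rpower x k).
  { unfold Rpower. apply exp_le. nra. }
  assert (Hk2 : M - 2 <= Rpower x k) by lra.
  replace x with (Rpower (Rpower x k) (/ k)).
  apply Rle_Rpower_l. left; apply Rinv_0_lt_compat; lra. lra.
  rewrite Rpower_mult. rewrite Rinv_r by lra. apply Rpower_1; lra.
Qed.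

Lemma g_cont S pM : 0 < S -> 1 < pM ->
  continuous (fun p => rpow S ((p + 1) / (p - 1))) pM.
Proof.
  intros HS HpM. apply continuous_ext with (fun p => exp ((p + 1) / (p - 1) * ln S)).
  intros x. rewrite rpow_pos by auto. reflexivity.
  apply (ex_derive_continuous (K := R_AbsRing) (V := R_NormedModule)). auto_derive. lra.
Qed.

Theorem lemma2p5 (M : R) (m : nat) (v : R -> R -> R) (tz : R -> nat -> R) :
  2 < M -> (1 <= m)%nat ->
  (forall p, 1 < p < (M + 2) / (M - 2) ->
     radial_sol M p (v p) /\ nodal_points m (v p) (tz p) /\ 0 < v p 0) ->
  forall i : nat, (i < m)%nat ->
    let I1 := fun p => RInt (fun t => wgt M t * rpow (Rabs (v p t)) (p + 1))
                            (tz p i) (tz p (S i)) in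
    let I2 := fun p => RInt (fun t => wgt M t * Derive (v p) t ^ 2)
                            (tz p i) (tz p (S i)) in
    liminf_left I1 ((M + 2) / (M - 2)) = liminf_left I2 ((M + 2) / (M - 2)) /\
    Rbar_le (Finite (rpow (S_M M) (M / 2))) (liminf_left I1 ((M + 2) / (M - 2))) /\
    Rbar_lt (Finite 0)
      (liminf_left (fun p => maxabs (v p) (tz p i) (tz p (S i))) ((M + 2) / (M - 2))).
Proof.
  intros HM Hm Hsol i Hi I1 I2.
  set (pM := (M + 2) / (M - 2)).
  assert (HpM : 1 < pM).
  { unfold pM. replace ((M + 2) / (M - 2)) with (1 + 4 / (M - 2)) by (field; lra).
    assert (0 < 4 / (M - 2)) by (apply Rdiv_lt_0_compat; lra). lra. }
  assert (HZ : forall p, 1 < p < pM -> zhyp M p m (v p) (tz p) i).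
  { intros p Hp. destruct (Hsol p Hp) as (A & B & C). refine (conj HM (conj _ (conj A (conj B (conj C Hi))))). lra. }
  split; [|split].
  - apply (liminf_ext I1 I2 pM (pM - 1)). lra. intros p Hp. unfold I1, I2.
    apply (energy M p m (v p) (tz p) i). apply HZ; lra.
  - destruct (Rle_dec (S_M M) 0) as [HS|HS].
    + rewrite rpow_le0 by auto. apply liminf_lower. intros eps He. exists (pM - 1). split. lra.
      intros p Hp. assert (Hz := HZ p ltac:(lra)).
      pose proof (zone_bounds _ _ _ _ _ _ Hz) as Hb.
      assert (0 <= I1 p).
      { unfold I1. apply RInt_ge0. lra. apply (I1_eq M p m (v p) (tz p) i Hz).
        intros t Ht. apply Rmult_le_pos. apply wgt_ge0. apply rpow_ge0. }
      lra.
    + apply Rnot_le_lt in HS. apply liminf_lower. intros eps He.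
      destruct (cont_eps _ pM eps (g_cont (S_M M) pM HS HpM) He) as [d [Hd Hd2]].
      exists (Rmin d (pM - 1)). split. apply Rmin_glb_lt; lra.
      intros p Hp. assert (Rmin d (pM - 1) <= d) by apply Rmin_l.
      assert (Rmin d (pM - 1) <= pM - 1) by apply Rmin_r.
      assert (Hz := HZ p ltac:(lra)).
      pose proof (per_p M p m (v p) (tz p) i Hz ltac:(fold pM; lra) HS) as Hper.
      assert (Hg : Rabs (rpow (S_M M) ((p + 1) / (p - 1)) - rpow (S_M M) ((pM + 1) / (pM - 1))) < eps).
      { apply Hd2. rewrite Rabs_left by lra. lra. }
      replace ((pM + 1) / (pM - 1)) with (M / 2) in Hg by (unfold pM; field; lra).
      apply Rabs_def2 in Hg. unfold I1. lra.
  - set (k := (pM - 1) / 2).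
    assert (Hk : 0 < k) by (unfold k; lra).
    set (c := Rmin 1 (Rpower (M - 2) (/ k))).
    assert (Hc : 0 < c) by (unfold c; apply Rmin_glb_lt; [lra|apply Rpower_pos]).
    apply Rbar_lt_le_trans with (Finite c). simpl; auto.
    apply liminf_lower. intros eps He. exists k. split; auto.
    intros p Hp. assert (Hz := HZ p ltac:(unfold k in Hp; lra)).
    pose proof (zone_bounds _ _ _ _ _ _ Hz) as Hb.
    pose proof (zone_claim3 _ _ _ _ _ _ Hz) as H3.
    assert (Hx0 : 0 <= maxabs (v p) (tz p i) (tz p (S i))).
    { eapply Rle_trans. apply Rabs_pos. apply (zone_max _ _ _ _ _ _ Hz (tz p i)). lra. }
    assert (c <= maxabs (v p) (tz p i) (tz p (S i))).
    { apply (max_lower _ p k M); auto. unfold k in *; lra. }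
    lra.
Qed.
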